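(* Under the hypotheses in the context, the cohomology spaces of the differential algebra $(\mathcal A(\mathbf{CPE}),\{D_t,D_1,\dots,D_m\})$ are $$H^q_{\mathrm E}(\mathbf{CPE})\cong\begin{cases}0,& q<0,\ 1\le q\le m-2,\ q>m+1;\\ \mathbb R,& q=0;\\ \ker D_t^{m-1},& q=m-1;\\ H^m_{\mathrm H}(\mathbf{CPE})/\operatorname{im}D_t^m,& q=m+1,\end{cases}$$ and in degree $q=m$, $H^m_{\mathrm E}(\mathbf{CPE})/\operatorname{im}\big(H^{m-1}_{\mathrm H}(\mathbf{CPE})\big)\cong\ker D_t^m$, where the map $H^{m-1}_{\mathrm H}(\mathbf{CPE})\to H^m_{\mathrm E}(\mathbf{CPE})$ is induced by $\omega\mapsto(-1)^{m-1}dt\wedge\omega$.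
   Context: Fix an integer $m\ge 2$, $M=\{1,\dots,m\}$, $N=\{2,\dots,m\}$; indices $\lambda,\mu$ in $M$, $\alpha,\beta$ in $N$; repeated upper/lower indices are summed. $\mathbb I=\mathbb Z_+^m$ is the set of multi-indices $\mathrm i$; $\mathrm i+(\mu)$ increases the $\mu$-th entry by $1$, $(\mu)=0+(\mu)$, $2(\mu)=(\mu)+(\mu)$; $\mathbb I_0=\{\mathrm i:i^1=0\}$, $\mathbb I_1=\{\mathrm i:i^1\in\{0,1\}\}$. $\mathcal A(\mathbf{CPE})$ is the algebra of smooth real functions of finitely many of the variables $t\in\mathbb R$, $x^\mu$, $u^1_{\mathrm i}$ ($\mathrm i\in\mathbb I_0$), $u^\alpha_{\mathrm i}$ ($\mathrm i\in\mathbb I$), $p_{\mathrm i}$ ($\mathrm i\in\mathbb I_1$). It carries commuting derivations $D_\mu=\partial_{x^\mu}+u^1_{\mathrm i_0+(\mu)}\partial_{u^1_{\mathrm i_0}}+u^\alpha_{\mathrm i+(\mu)}\partial_{u^\alpha_{\mathrm i}}+p_{\mathrm i_1+(\mu)}\partial_{p_{\mathrm i_1}}$ (sums over $\mathrm i_0\in\mathbb I_0$, $\mathrm i\in\mathbb I$, $\mathrm i_1\in\mathbb I_1$), where the variables not in the list are expressed recursively by $u^1_{\mathrm k}=-u^\beta_{\mathrm k-(1)+(\beta)}$ ($k^1\ge1$) and $p_{\mathrm k}=-D_{\mathrm k-2(1)}\Phi$ ($k^1\ge2$), $\Phi=\sum_\alpha p_{2(\alpha)}+u^\lambda_{(\mu)}u^\mu_{(\lambda)}$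 with $u^1_{(1)}$ replaced by $-u^\alpha_{(\alpha)}$ (this is the quotient of the algebra of finite-order functions of $t,x^\mu,u^\mu_{\mathrm i},p_{\mathrm i}$ by the differential ideal generated by $u^\mu_{(\mu)}$ and $\Delta p+u^\lambda_{(\mu)}u^\mu_{(\lambda)}$, $\Delta=\sum_\mu D_\mu^2$). $D_{\mathrm i}=D_1^{i^1}\cdots D_m^{i^m}$. Let $\mathrm E=(E^1,\dots,E^m,E)\in\mathcal A(\mathbf{CPE})^{m+1}$ satisfy $D_\mu E^\mu=0$ and $\Delta E+2u^\lambda_{(\mu)}D_\lambda E^\mu=0$ (with $u^1_{(1)}=-u^\alpha_{(\alpha)}$), let $\mathrm{ev}_{\mathrm E}=D_{\mathrm i_0}E^1\,\partial_{u^1_{\mathrm i_0}}+D_{\mathrm i}E^\alpha\,\partial_{u^\alpha_{\mathrm i}}+D_{\mathrm i_1}E\,\partial_{p_{\mathrm i_1}}$, assumed to commute with all $D_\mu$, and let $D_t=\partial_t+\mathrm{ev}_{\mathrm E}$, so $[D_t,D_\mu]=0$. Horizontal forms $\Omega^q_{\mathrm H}$: $q$-forms in $dx^\mu$ with skew-symmetric coefficients in $\mathcal A(\mathbf{CPE})$ ($0\le q\le m$, zero otherwise), $d_{\mathrm H}=dx^\mu\wedge D_\mu$ (acting on coefficients), $H^q_{\mathrm H}(\mathbf{CPE})=\ker d_{\mathrm H}/\operatorname{im}d_{\mathrm H}$. Evolution forms: $\Omega^q_{\mathrm E}=dt\wedge\Omega^{q-1}_{\mathrm H}\oplus\Omega^q_{\mathrm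 H}$ with $d_{\mathrm E}(dt\wedge\omega^{q-1}+\omega^q)=dt\wedge(D_t\omega^q-d_{\mathrm H}\omega^{q-1})+d_{\mathrm H}\omega^q$ ($D_t$ acting coefficientwise), and $H^q_{\mathrm E}(\mathbf{CPE})=\ker d_{\mathrm E}/\operatorname{im}d_{\mathrm E}$ in degree $q$. $D_t$ acting coefficientwise commutes with $d_{\mathrm H}$ and induces $D^q_t:H^q_{\mathrm H}(\mathbf{CPE})\to H^q_{\mathrm H}(\mathbf{CPE})$. Standing fact used in the statement: $H^q_{\mathrm H}(\mathbf{CPE})=0$ for $1\le q\le m-2$, and $H^0_{\mathrm H}(\mathbf{CPE})$ consists of the smooth functions of $t$ alone. *)

(* Defs.v *)
From Stdlib Require Import Reals ZArith List.
From Coquelicot Require Import Coquelicot.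
From mathcomp Require Import ssreflect ssrfun ssrbool eqtype ssrnat seq choice
  fintype finfun bigop finset.

Set Implicit Arguments.
Unset Strict Implicit.
Unset Printing Implicit Defensive.

Local Open Scope R_scope.

Section CPE.
(* The dimension is m = n.+2 (so m >= 2).  Index mu : 'I_m; the paper's index 1
   is ord0, the paper's N = {2..m} is {a | a != ord0}. *)
Context (n : nat).
Local Notation m := n.+2.

Definition mi := {ffun 'I_m -> nat}.
Definition mi0 : mi := [ffun _ => 0%N].
Definition addu (i : mi) (mu : 'I_m) : mi := [ffun k => (i k + (k == mu))%N].
Definition subu (i : mi) (mu : 'I_m) : mi := [ffun k => (i k - (k == mu))%N].
Definition e1 (mu : 'I_m) : mi := addu mi0 mu.
Definition e2 (mu : 'I_m) : mi := addu (e1 mu) mu.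

(* jet variables: t, x^mu, u^mu_i, p_i *)
Inductive var : Type :=
| Vt : var
| Vx : 'I_m -> var
| Vu : 'I_m -> mi -> var
| Vp : mi -> var.

Definition var_eqb (v w : var) : bool :=
  match v, w with
  | Vt, Vt => true
  | Vx a, Vx b => a == b
  | Vu a i, Vu b j => (a == b) && (i == j)
  | Vp i, Vp j => i == j
  | _, _ => false
  end.

(* the variables of A(CPE): u^1_i (i in I_0), u^alpha_i (i in I), p_i (i in I_1) *)
Definition allowed (v : var) : bool :=
  match v with
  | Vt => true
  | Vx _ => true
  | Vu mu i => (mu != ord0) || (i ord0 == 0%N)
  | Vp i => (i ord0 <= 1)%N
  end.

Definition Point := var -> R.
Definition fn := Point -> R.

Definition dep_on (S : list var) (f : fn) : Prop :=
  forall p q : Point, (forall v, In v S -> p v = q v) -> f p = f q.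

Definition upd (p : Point) (v : var) (s : R) : Point :=
  fun w => if var_eqb w v then s else p w.
Definition pd (v : var) (f : fn) : fn :=
  fun p => Derive (fun s => f (upd p v s)) (p v).
Definition exd (v : var) (f : fn) : Prop :=
  forall p, ex_derive (fun s => f (upd p v s)) (p v).
Definition iter_pd (vs : list var) (f : fn) : fn := List.fold_right pd f vs.

Definition cont_on (S : list var) (g : fn) : Prop :=
  forall (p : Point) (eps : R), 0 < eps -> exists del : R, 0 < del /\
    forall q : Point, (forall v, In v S -> Rabs (q v - p v) < del) ->
      Rabs (g q - g p) < eps.

Definition smooth_on (S : list var) (f : fn) : Prop :=
  (forall vs v, exd v (iter_pd vs f)) /\ (forall vs, cont_on S (iter_pd vs f)).

Definition inA (f : fn) : Prop :=
  exists S : list var, List.Forall (fun v => allowed v = true) S /\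
    dep_on S f /\ smooth_on S f.

(* the derivation  sum_v w(v) d/dv  (w evaluated at the point), computed as the
   derivative along the straight line through p in direction w p *)
Definition Dder (w : Point -> Point) (f : fn) : fn :=
  fun p => Derive (fun s => f (fun v => p v + s * w p v)) 0.

Definition sumN (F : 'I_m -> R) : R := \big[Rplus/0]_(a < m | a != ord0) F a.
Definition sumM (F : 'I_m -> R) : R := \big[Rplus/0]_(a < m) F a.

Definition wN (a : 'I_m) (p : Point) (v : var) : R :=
  match v with
  | Vt => 0
  | Vx nu => if nu == a then 1 else 0
  | Vu mu i => p (Vu mu (addu i a))
  | Vp i => p (Vp (addu i a))
  end.
Definition Dalpha (a : 'I_m) : fn -> fn := Dder (wN a).

(* D_i for i in I_0 (only D_alpha, alpha in N) *)
Definition DN (i : mi) (f : fn) : fn :=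
  foldr (fun a g => if a == ord0 then g else iter (i a) (Dalpha a) g) f (enum 'I_m).

Definition U (l mu : 'I_m) (p : Point) : R :=
  if (l == ord0) && (mu == ord0) then - sumN (fun a => p (Vu a (e1 a)))
  else p (Vu l (e1 mu)).

Definition Phi : fn := fun p =>
  sumN (fun a => p (Vp (e2 a))) + sumM (fun l => sumM (fun mu => U l mu p * U mu l p)).

Definition w1 (p : Point) (v : var) : R :=
  match v with
  | Vt => 0
  | Vx nu => if nu == ord0 then 1 else 0
  | Vu mu i =>
      if mu == ord0 then - sumN (fun b => p (Vu b (addu i b)))
      else p (Vu mu (addu i ord0))
  | Vp i =>
      if i ord0 == 0%N then p (Vp (addu i ord0))
      else - DN (subu i ord0) Phi p
  end.
Definition D1 : fn -> fn := Dder w1.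

Definition Dtot (mu : 'I_m) : fn -> fn := if mu == ord0 then D1 else Dalpha mu.

Definition Dmi (i : mi) (f : fn) : fn :=
  foldr (fun a g => iter (i a) (Dtot a) g) f (enum 'I_m).

(* E = (E^1,...,E^m, E) given as Ec : 'I_m -> fn and E0 : fn *)
Definition wev (Ec : 'I_m -> fn) (E0 : fn) (p : Point) (v : var) : R :=
  match v with
  | Vt => 0
  | Vx _ => 0
  | Vu mu i => Dmi i (Ec mu) p
  | Vp i => Dmi i E0 p
  end.
Definition ev (Ec : 'I_m -> fn) (E0 : fn) : fn -> fn := Dder (wev Ec E0).

Definition wt (Ec : 'I_m -> fn) (E0 : fn) (p : Point) (v : var) : R :=
  match v with
  | Vt => 1
  | _ => wev Ec E0 p v
  end.
Definition Dt (Ec : 'I_m -> fn) (E0 : fn) : fn -> fn := Dder (wt Ec E0).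

Definition E_admissible (Ec : 'I_m -> fn) (E0 : fn) : Prop :=
  (forall mu, inA (Ec mu)) /\ inA E0 /\
  (forall p, sumM (fun mu => Dtot mu (Ec mu) p) = 0) /\
  (forall p, sumM (fun mu => Dtot mu (Dtot mu E0) p)
             + 2 * sumM (fun l => sumM (fun mu => U l mu p * Dtot l (Ec mu) p)) = 0) /\
  (forall (mu : 'I_m) (f : fn), inA f ->
      forall p, ev Ec E0 (Dtot mu f) p = Dtot mu (ev Ec E0 f) p).

(* horizontal forms: omega S = coefficient of dx^S (S sorted increasingly) *)
Definition hform := {set 'I_m} -> fn.
Definition hzero : hform := fun _ _ => 0.
Definition hadd (a b : hform) : hform := fun S p => a S p + b S p.
Definition hscale (c : R) (a : hform) : hform := fun S p => c * a S p.

Definition isH (q : Z) (om : hform) : Prop :=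
  forall S : {set 'I_m},
    (Z.of_nat #|S| <> q -> forall p, om S p = 0) /\ inA (om S).

Definition dH (om : hform) : hform := fun T p =>
  \big[Rplus/0]_(mu in T)
     ((-1) ^ #|[set nu in T | (nu < mu)%N]| * Dtot mu (om (T :\ mu)) p).

Definition hDt (Ec : 'I_m -> fn) (E0 : fn) (om : hform) : hform :=
  fun S => Dt Ec E0 (om S).

Definition ZH (q : Z) (om : hform) : Prop := isH q om /\ dH om = hzero.
Definition BH (q : Z) (om : hform) : Prop :=
  exists eta, isH (q - 1) eta /\ dH eta = om.

(* evolution forms: (a, b) stands for dt /\ a + b *)
Definition eform := (hform * hform)%type.
Definition ezero : eform := (hzero, hzero).
Definition eadd (x y : eform) : eform := (hadd x.1 y.1, hadd x.2 y.2).
Definition escale (c : R) (x : eform) : eform := (hscale c x.1, hscale c x.2).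

Definition isE (q : Z) (x : eform) : Prop := isH (q - 1) x.1 /\ isH q x.2.

Definition dE (Ec : 'I_m -> fn) (E0 : fn) (x : eform) : eform :=
  (fun S p => Dt Ec E0 (x.2 S) p - dH x.1 S p, dH x.2).

Definition ZE Ec E0 (q : Z) (x : eform) : Prop := isE q x /\ dE Ec E0 x = ezero.
Definition BE Ec E0 (q : Z) (x : eform) : Prop :=
  exists y, isE (q - 1) y /\ dE Ec E0 y = x.

End CPE.

(* Z/B ~= Z'/B' as real vector spaces (Z, B, Z', B' subspaces, B <= Z, B' <= Z'):
   a linear map f on Z with f(Z) <= Z', f(B) <= B', inducing a bijection. *)
Definition quot_iso {V W : Type}
  (addV : V -> V -> V) (scV : R -> V -> V) (addW : W -> W -> W) (scW : R -> W -> W)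
  (Z B : V -> Prop) (Z' B' : W -> Prop) : Prop :=
  exists f : V -> W,
    (forall x y, Z x -> Z y -> f (addV x y) = addW (f x) (f y)) /\
    (forall c x, Z x -> f (scV c x) = scW c (f x)) /\
    (forall x, Z x -> Z' (f x)) /\
    (forall x, B x -> B' (f x)) /\
    (forall y, Z' y -> exists x, Z x /\ B' (addW y (scW (-1) (f x)))) /\
    (forall x, Z x -> B' (f x) -> B x).

(* Main.v *)
Require Import Defs.
From Stdlib Require Import Reals ZArith List Lra Lia FunctionalExtensionality.
From Coquelicot Require Import Coquelicot.
From mathcomp Require Import ssreflect ssrfun ssrbool eqtype ssrnat seq choice fintype finfun bigop finset.
Set Implicit Arguments.
Unset Strict Implicit.
Unset Printing Implicit Defensive.
Local Open Scope R_scope.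

Lemma two_step (phi Bf : R -> R -> R) t0 b A :
  is_derive (fun s => phi s t0) 0 A ->
  (forall s t, is_derive (fun t => phi s t) t (Bf s t)) ->
  (forall eps, 0 < eps -> exists del, 0 < del /\ forall s t, Rabs s < del ->
      Rabs (t - t0) < del -> Rabs (Bf s t - Bf 0 t0) < eps) ->
  is_derive (fun s => phi s (t0 + s * b)) 0 (A + b * Bf 0 t0).
Proof.
move=> HA HB HC; apply is_derive_Reals; move/is_derive_Reals: HA => HA.
move=> eps He.
have Hb := Rabs_pos b.
case: (HA (eps/2) ltac:(lra)) => [[d1 Hd1] Q1].
case: (HC (eps / (2 * (Rabs b + 1)))) => [|d2 [Hd2 Q2]].
  apply Rdiv_lt_0_compat; lra.
have Hd3 : 0 < d2 / (Rabs b + 1) by apply Rdiv_lt_0_compat; lra.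
exists (mkposreal _ (Rmin_pos _ _ Hd1 (Rmin_pos _ _ Hd2 Hd3))) => h Hh Hhd /=.
simpl in Hhd.
have m1 := Rmin_l d1 (Rmin d2 (d2 / (Rabs b + 1))).
have m2 := Rmin_r d1 (Rmin d2 (d2 / (Rabs b + 1))).
have m3 := Rmin_l d2 (d2 / (Rabs b + 1)).
have m4 := Rmin_r d2 (d2 / (Rabs b + 1)).
have h1 : Rabs h < d1 by lra.
have h2 : Rabs h < d2 by lra.
have h3 : Rabs h < d2 / (Rabs b + 1) by lra.
have Hhb : Rabs (h * b) < d2.
  rewrite Rabs_mult.
  apply: (Rle_lt_trans _ (Rabs h * (Rabs b + 1))).
    apply Rmult_le_compat_l; [apply Rabs_pos|lra].
  have -> : d2 = d2 / (Rabs b + 1) * (Rabs b + 1) by field; lra.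
  apply Rmult_lt_compat_r; lra.
case: (@MVT_cor4 (fun t => phi h t) (Bf h) t0 (Rabs (h * b))
   (fun c _ => HB h c) (t0 + h * b)) => [|c [Ec Hc]].
  by replace (t0 + h * b - t0) with (h * b) by ring; lra.
have Q := Q1 h Hh h1.
rewrite Rplus_0_l in Q.
rewrite Rplus_0_l Rmult_0_l Rplus_0_r.
replace (t0 + h * b - t0) with (h * b) in Ec, Hc by ring.
have Hcc : Rabs (c - t0) < d2 by lra.
have QQ := Q2 h c h2 Hcc.
replace ((phi h (t0 + h * b) - phi 0 t0) / h - (A + b * Bf 0 t0))
  with (((phi h t0 - phi 0 t0) / h - A) + b * (Bf h c - Bf 0 t0)).
2:{ have -> : phi h (t0 + h * b) = phi h t0 + Bf h c * (h * b) by lra.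
    field. by []. }
apply: Rle_lt_trans; first by apply Rabs_triang.
rewrite Rabs_mult.
have : Rabs b * Rabs (Bf h c - Bf 0 t0) <= Rabs b * (eps / (2 * (Rabs b + 1))).
  apply Rmult_le_compat_l; lra.
have : Rabs b * (eps / (2 * (Rabs b + 1))) <= eps / 2.
  have -> : Rabs b * (eps / (2 * (Rabs b + 1))) = (eps / 2) * (Rabs b / (Rabs b + 1)) by field; lra.
  have : Rabs b / (Rabs b + 1) <= 1.
    apply (Rmult_le_reg_r (Rabs b + 1)); first lra.
    have -> : Rabs b / (Rabs b + 1) * (Rabs b + 1) = Rabs b by field; lra.
    lra.
  move=> H; have : 0 <= eps / 2 by lra. nra.
lra.
Qed.

Section P1.
Context (n : nat).
Local Notation m := n.+2.
Local Notation var := (@Defs.var n).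
Local Notation Point := (@Defs.Point n).
Local Notation fn := (@Defs.fn n).

Lemma var_eqbP (v w : var) : var_eqb v w = true <-> v = w.
Proof.
case: v => [|a|a i|i]; case: w => [|b|b j|j] /=; try (split; congruence).
- split; [by move/eqP->|by move=>[->]; rewrite eqxx].
- split; [by case/andP=> /eqP-> /eqP->|by move=>[->->]; rewrite !eqxx].
- split; [by move/eqP->|by move=>[->]; rewrite eqxx].
Qed.

Lemma var_eqb_refl (v : var) : var_eqb v v = true.
Proof. by apply/var_eqbP. Qed.

Lemma var_dec (v w : var) : {v = w} + {v <> w}.
Proof.
case E: (var_eqb v w).
- left; by apply/var_eqbP.
- right=> H; move/var_eqbP: H; by rewrite E.
Qed.

Lemma upd_same (p : Point) v s : upd p v s v = s.
Proof. by rewrite /upd var_eqb_refl. Qed.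

Lemma upd_other (p : Point) v w s : w <> v -> upd p v s w = p w.
Proof. move=> H; rewrite /upd; case E: (var_eqb w v) => //; by move/var_eqbP: E. Qed.

Lemma upd_id (p : Point) v : upd p v (p v) = p.
Proof.
apply functional_extensionality=> w; rewrite /upd; case E: (var_eqb w v) => //.
by move/var_eqbP: E=>->.
Qed.

Lemma upd_upd (p : Point) v a b : upd (upd p v a) v b = upd p v b.
Proof.
apply functional_extensionality=> w; rewrite /upd; by case: (var_eqb w v).
Qed.

Lemma upd_comm (p : Point) u v a b : u <> v -> upd (upd p u a) v b = upd (upd p v b) u a.
Proof.
move=> H; apply functional_extensionality=> w; rewrite /upd.
case E1: (var_eqb w v); case E2: (var_eqb w u) => //.
move/var_eqbP: E1 => ?; move/var_eqbP: E2 => ?; subst; by case: H.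
Qed.

Lemma dep_on_mono (S S' : list var) (f : fn) : incl S S' -> dep_on S f -> dep_on S' f.
Proof. move=> HI H p q Hpq; apply H=> v Hv; apply Hpq; by apply HI. Qed.

Lemma dep_on_upd (S : list var) (f : fn) v (p : Point) s : dep_on S f -> ~ In v S -> f (upd p v s) = f p.
Proof. move=> H Hv; apply H=> w Hw; rewrite upd_other //; by move=> E; subst. Qed.

Lemma pd_notin (S : list var) (f : fn) v p : dep_on S f -> ~ In v S -> pd v f p = 0.
Proof.
move=> H Hv; rewrite /pd; rewrite (Derive_ext _ (fun _ => f p)); first by rewrite Derive_const.
move=> t; exact: (dep_on_upd _ _ H Hv).
Qed.

Lemma exd_notin (S : list var) (f : fn) v : dep_on S f -> ~ In v S -> exd v f.
Proof.
move=> H Hv p; apply: (ex_derive_ext (fun _ => f p)); last by apply: ex_derive_const.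
move=> t; by rewrite (dep_on_upd _ _ H Hv).
Qed.

Lemma dep_on_pd (S : list var) (f : fn) v : dep_on S f -> dep_on S (pd v f).
Proof.
move=> H p q Hpq.
case: (In_dec var_dec v S) => Hv.
- rewrite /pd (Hpq v Hv); apply Derive_ext=> t; apply H=> w Hw.
  rewrite /upd; case: (var_eqb w v) => //; by apply Hpq.
- by rewrite (pd_notin _ H Hv) (pd_notin _ H Hv).
Qed.

Lemma cont_on_mono (S S' : list var) (g : fn) : incl S S' -> cont_on S g -> cont_on S' g.
Proof.
move=> HI H p eps He; case: (H p eps He) => del [Hd Hq]; exists del; split=> // q Hq'.
apply Hq=> v Hv; apply Hq'; by apply HI.
Qed.

Lemma cont_on_dep (S T : list var) (g : fn) : dep_on T g -> cont_on S g -> cont_on T g.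
Proof.
move=> HT H p eps He; case: (H p eps He) => del [Hd Hq]; exists del; split=> // q Hq'.
set q' : Point := fun w => if In_dec var_dec w T then q w else p w.
have -> : g q = g q'.
  apply HT=> v Hv; rewrite /q'; by case: (In_dec var_dec v T).
apply Hq=> v _; rewrite /q'; case: (In_dec var_dec v T) => Hv.
- by apply Hq'.
- rewrite Rminus_eq_0 Rabs_R0; lra.
Qed.

Lemma cont_on_const (S : list var) c : cont_on S (fun _ => c).
Proof. move=> p eps He; exists 1; split; [lra|]=> q _; rewrite Rminus_eq_0 Rabs_R0; lra. Qed.

Lemma cont_on_proj (S : list var) v : In v S -> cont_on S (fun p => p v).
Proof. move=> Hv p eps He; exists eps; split=> // q Hq; by apply Hq. Qed.

Lemma cont_on_plus (S : list var) (f g : fn) : cont_on S f -> cont_on S g -> cont_on S (fun p => f p + g p).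
Proof.
move=> Hf Hg p eps He.
case: (Hf p (eps/2) ltac:(lra)) => d1 [H1 Q1].
case: (Hg p (eps/2) ltac:(lra)) => d2 [H2 Q2].
exists (Rmin d1 d2); split; first by apply Rmin_pos.
move=> q Hq.
have A := Q1 q (fun v Hv => Rlt_le_trans _ _ _ (Hq v Hv) (Rmin_l _ _)).
have B := Q2 q (fun v Hv => Rlt_le_trans _ _ _ (Hq v Hv) (Rmin_r _ _)).
replace (f q + g q - (f p + g p)) with ((f q - f p) + (g q - g p)) by ring.
apply: Rle_lt_trans; first by apply Rabs_triang. lra.
Qed.

Lemma cont_on_scal (S : list var) c (f : fn) : cont_on S f -> cont_on S (fun p => c * f p).
Proof.
move=> Hf p eps He.
case: (Hf p (eps / (Rabs c + 1))) => [|d [Hd Q]].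
  apply Rdiv_lt_0_compat=> //; move: (Rabs_pos c); lra.
exists d; split=> // q Hq.
replace (c * f q - c * f p) with (c * (f q - f p)) by ring.
rewrite Rabs_mult.
have Hc := Rabs_pos c.
have := Q q Hq => HQ.
apply: (Rle_lt_trans _ ((Rabs c + 1) * Rabs (f q - f p))).
  apply Rmult_le_compat_r; [apply Rabs_pos|lra].
have -> : eps = (Rabs c + 1) * (eps / (Rabs c + 1)) by field; lra.
apply Rmult_lt_compat_l; lra.
Qed.

Lemma cont_on_mult (S : list var) (f g : fn) : cont_on S f -> cont_on S g -> cont_on S (fun p => f p * g p).
Proof.
move=> Hf Hg p eps He.
set A := Rabs (f p) + 1. set B := Rabs (g p) + 1.
have HA : 0 < A by rewrite /A; move: (Rabs_pos (f p)); lra.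
have HB : 0 < B by rewrite /B; move: (Rabs_pos (g p)); lra.
set e := Rmin 1 (eps / (2 * (A + B))).
have He' : 0 < e by apply Rmin_pos; [lra|apply Rdiv_lt_0_compat; lra].
case: (Hf p e He') => d1 [H1 Q1].
case: (Hg p e He') => d2 [H2 Q2].
exists (Rmin d1 d2); split; first by apply Rmin_pos.
move=> q Hq.
have F := Q1 q (fun v Hv => Rlt_le_trans _ _ _ (Hq v Hv) (Rmin_l _ _)).
have G := Q2 q (fun v Hv => Rlt_le_trans _ _ _ (Hq v Hv) (Rmin_r _ _)).
have e1 : e <= 1 by apply Rmin_l.
have e2 : e <= eps / (2 * (A + B)) by apply Rmin_r.
replace (f q * g q - f p * g p) with ((f q - f p) * (g q - g p) + (f q - f p) * g p + f p * (g q - g p)) by ring.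
set x := f q - f p in F *. set y := g q - g p in G *.
apply: (Rle_lt_trans _ (Rabs x * Rabs y + Rabs x * Rabs (g p) + Rabs (f p) * Rabs y)).
  rewrite -!Rabs_mult. apply: Rle_trans; first by apply Rabs_triang.
  apply Rplus_le_compat_r; apply Rabs_triang.
have Hx := Rabs_pos x. have Hy := Rabs_pos y.
have Hgp := Rabs_pos (g p). have Hfp := Rabs_pos (f p).
have : Rabs x * Rabs y + Rabs x * Rabs (g p) + Rabs (f p) * Rabs y <= e * (A + B).
  rewrite /A /B.
  have : Rabs x * Rabs y <= e * 1.
    apply Rmult_le_compat; lra.
  have : Rabs x * Rabs (g p) <= e * Rabs (g p) by apply Rmult_le_compat_r; lra.
  have : Rabs (f p) * Rabs y <= Rabs (f p) * e by apply Rmult_le_compat_l; lra.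
  nra.
have : e * (A + B) < eps.
  apply: (Rle_lt_trans _ (eps / (2 * (A + B)) * (A + B))).
    apply Rmult_le_compat_r; lra.
  have -> : eps / (2 * (A + B)) * (A + B) = eps / 2 by field; lra.
  lra.
lra.
Qed.

Definition lsum (S : list var) (F : var -> R) : R := fold_right (fun v acc => F v + acc) 0 S.
Definition C1 (S : list var) (f : fn) := dep_on S f /\ forall u, In u S -> exd u f /\ cont_on S (pd u f).
Definition line (p d : Point) (s : R) : Point := fun w => p w + s * d w.

Lemma lsum_abs_le (S : list var) (d : var -> R) u : In u S -> Rabs (d u) <= lsum S (fun u => Rabs (d u)).
Proof.
elim: S => //= a S IH [->|H].
- have : 0 <= lsum S (fun u => Rabs (d u)).
    elim: S {IH} => /= [|b S' IH']; [lra|]; have := Rabs_pos (d b); lra.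
  lra.
- have := IH H; have := Rabs_pos (d a); lra.
Qed.

Lemma line0 (p d : Point) : line p d 0 = p.
Proof. apply functional_extensionality=> w; rewrite /line; ring. Qed.

Lemma pd_at_upd (f : fn) v (q : Point) t :
  exd v f -> is_derive (fun t => f (upd q v t)) t (pd v f (upd q v t)).
Proof.
move=> H.
have E : ex_derive (fun s => f (upd q v s)) t.
  apply: (ex_derive_ext (fun s => f (upd (upd q v t) v s))) => [s|]; first by rewrite upd_upd.
  have := H (upd q v t); by rewrite upd_same.
rewrite /pd upd_same (Derive_ext _ (fun s => f (upd q v s))); last by move=> s; rewrite upd_upd.
by apply: Derive_correct.
Qed.

Lemma pd_freeze (f : fn) u v t (q : Point) : u <> v ->
  pd u (fun q => f (upd q v t)) q = pd u f (upd q v t).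
Proof.
move=> Huv; rewrite /pd upd_other //; apply Derive_ext=> s; by rewrite upd_comm.
Qed.

Lemma chain (S : list var) : NoDup S -> forall f, C1 S f -> forall (p d : Point),
  is_derive (fun s => f (line p d s)) 0 (lsum S (fun v => d v * pd v f p)).
Proof.
elim: S => [|v S IH] HN f [Hdep Hpd] p d.
- apply (is_derive_ext (fun _ => f p)).
    move=> s; apply Hdep=> w [].
  apply is_derive_Reals; apply derivable_pt_lim_const.
- move/NoDup_cons_iff: HN => [HvS HN].
  set g := fun q => f (upd q v (p v)).
  have HvS' : forall u, In u S -> u <> v by move=> u Hu E; subst.
  have Cg : C1 S g.
    split.
    + move=> q q' Hq; rewrite /g; apply Hdep=> w /= [<-|Hw]; first by rewrite !upd_same.
      rewrite !upd_other; [by apply Hq| by apply HvS'|by apply HvS'].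
    + move=> u Hu; have Huv := HvS' u Hu; case: (Hpd u (or_intror Hu)) => Hex Hc; split.
      * move=> q; have := Hex (upd q v (p v)); rewrite upd_other // => E.
        apply: (ex_derive_ext _ _ _ _ E) => s; by rewrite /g (upd_comm _ _ _ Huv).
      * move=> q0 eps He.
        case: (Hc (upd q0 v (p v)) eps He) => del [Hd Q]; exists del; split=> // q Hq.
        rewrite /g !pd_freeze //; apply Q=> w /= [<-|Hw]; first by rewrite !upd_same Rminus_eq_0 Rabs_R0.
        rewrite !upd_other; [by apply Hq| by apply HvS'|by apply HvS'].
  have HA := IH HN g Cg p d.
  have E1 : lsum S (fun u => d u * pd u g p) = lsum S (fun u => d u * pd u f p).
    have : forall u, In u S -> pd u g p = pd u f p.
      by move=> u Hu; rewrite /g pd_freeze ?upd_id //; apply HvS'.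
    elim: (S) => //= a S' IH' H; rewrite H /=; last by left.
    by rewrite IH' // => u Hu; apply H; right.
  rewrite E1 in HA.
  set phi := fun s t => f (upd (line p d s) v t).
  set Bf := fun s t => pd v f (upd (line p d s) v t).
  have HB : forall s t, is_derive (fun t => phi s t) t (Bf s t).
    move=> s t; by apply: pd_at_upd; case: (Hpd v (or_introl erefl)).
  have HC : forall eps, 0 < eps -> exists del, 0 < del /\ forall s t, Rabs s < del ->
      Rabs (t - p v) < del -> Rabs (Bf s t - Bf 0 (p v)) < eps.
    move=> eps He.
    case: (Hpd v (or_introl erefl)) => _ Hc.
    case: (Hc p eps He) => del [Hd Q].
    set M := lsum (v :: S) (fun u => Rabs (d u)) + 1.
    have HM : 0 < M.
      rewrite /M; have : 0 <= lsum (v :: S) (fun u => Rabs (d u)).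
        elim: (v :: S) => /= [|b S' IH']; [lra|]; have := Rabs_pos (d b); lra.
      lra.
    have Hdm : 0 < del / M by apply Rdiv_lt_0_compat.
    exists (Rmin del (del / M)); split; first by apply Rmin_pos.
    move=> s t Hs Ht.
    have m1 := Rmin_l del (del / M). have m2 := Rmin_r del (del / M).
    rewrite /Bf line0 upd_id.
    apply Q=> w Hw.
    case: (var_dec w v) => [->|Hwv].
    * by rewrite upd_same; lra.
    * rewrite upd_other // /line.
      replace (p w + s * d w - p w) with (s * d w) by ring.
      rewrite Rabs_mult.
      have := lsum_abs_le d Hw => HdM.
      have HMd : M = lsum (v :: S) (fun u => Rabs (d u)) + 1 by [].
      have Hs0 := Rabs_pos s. have Hd0 := Rabs_pos (d w).
      apply: (Rle_lt_trans _ (Rabs s * M)).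
        apply Rmult_le_compat_l; lra.
      have -> : del = del / M * M by field; lra.
      apply Rmult_lt_compat_r; lra.
  have H := @two_step phi Bf (p v) (d v) _ HA HB HC.
  rewrite /Bf line0 upd_id in H.
  rewrite /= Rplus_comm.
  apply: (is_derive_ext _ _ _ _ _ H)=> s.
  rewrite /phi; congr f.
  by rewrite -{2}(upd_id (line p d s) v).
Qed.
End P1.

Section P3.
Context (n : nat).
Local Notation m := n.+2.
Local Notation var := (@Defs.var n).
Local Notation Point := (@Defs.Point n).
Local Notation fn := (@Defs.fn n).

Definition Sm (S : list var) (f : fn) := dep_on S f /\ smooth_on S f.

Lemma Sm_ext (S : list var) (f g : fn) : (forall p, f p = g p) -> Sm S f -> Sm S g.
Proof. by move=> H; rewrite (functional_extensionality _ _ H). Qed.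

Lemma Sm_C1 (S : list var) f : Sm S f -> C1 S f.
Proof.
case=> Hd [He Hc]; split=> // u Hu; split; first by apply (He nil).
by apply (Hc (u :: nil)).
Qed.

Lemma Sm_mono (S S' : list var) f : incl S S' -> Sm S f -> Sm S' f.
Proof.
move=> HI [Hd [He Hc]]; split; first by apply: dep_on_mono Hd.
split=> // vs; apply: cont_on_mono (Hc vs) => //.
Qed.

Lemma Sm_pd (S : list var) f v : Sm S f -> Sm S (pd v f).
Proof.
move=> [Hd [He Hc]]; split; first by apply: dep_on_pd.
split=> vs.
- move=> w; have := He (app vs (v :: nil)) w; by rewrite /iter_pd fold_right_app.
- have := Hc (app vs (v :: nil)); by rewrite /iter_pd fold_right_app.
Qed.

Lemma Sm_dedup (S : list var) f : Sm S f -> Sm (nodup (@var_dec n) S) f.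
Proof. apply Sm_mono=> v; by rewrite nodup_In. Qed.

Lemma pd_const v c : pd v (fun _ : Point => c) = fun _ => 0.
Proof. apply functional_extensionality=> p; by rewrite /pd Derive_const. Qed.

Lemma iter_pd_const vs c : exists c', iter_pd vs (fun _ : Point => c) = fun _ => c'.
Proof.
elim: vs => [|v vs [c' IH]] /=; first by exists c.
exists 0; rewrite /iter_pd /= in IH *; by rewrite IH pd_const.
Qed.

Lemma Sm_const (S : list var) c : Sm S (fun _ => c).
Proof.
split; first by [].
split=> vs; case: (iter_pd_const vs c) => c' ->.
- move=> w p; apply ex_derive_const.
- apply cont_on_const.
Qed.

Lemma pd_proj v w : pd w (fun p : Point => p v) = fun _ => if var_eqb v w then 1 else 0.
Proof.
apply functional_extensionality=> p; rewrite /pd /upd.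
case: (var_eqb v w); [exact: Derive_id|by rewrite Derive_const].
Qed.

Lemma Sm_proj (S : list var) v : In v S -> Sm S (fun p => p v).
Proof.
move=> Hv; split; first by move=> p q H; apply H.
have : forall vs, iter_pd vs (fun p : Point => p v) = (fun p => p v) \/
          exists c, iter_pd vs (fun p : Point => p v) = fun _ => c.
  elim=> [|w vs IH]; first by left.
  right; rewrite /iter_pd /= -/(iter_pd vs _).
  case: IH => [->|[c ->]]; first by rewrite pd_proj; eexists.
  rewrite pd_const; by eexists.
move=> H; split=> vs; case: (H vs) => [->|[c ->]].
- move=> w p; rewrite /upd; case: (var_eqb v w).
  + apply: (ex_derive_ext (fun t => t)) => // ; apply ex_derive_id.
  + apply ex_derive_const.
- move=> w p; apply ex_derive_const.
- by apply cont_on_proj.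
- by apply cont_on_const.
Qed.

Lemma pd_plus v (F G : fn) : exd v F -> exd v G ->
  pd v (fun p => F p + G p) = fun p => pd v F p + pd v G p.
Proof.
move=> HF HG; apply functional_extensionality=> p; rewrite /pd.
by rewrite Derive_plus; [| apply HF | apply HG].
Qed.

Lemma pd_mult v (F G : fn) : exd v F -> exd v G ->
  pd v (fun p => F p * G p) = fun p => pd v F p * G p + F p * pd v G p.
Proof.
move=> HF HG; apply functional_extensionality=> p; rewrite /pd.
rewrite Derive_mult; [| apply HF | apply HG].
by rewrite !upd_id.
Qed.

Lemma exd_plus v (F G : fn) : exd v F -> exd v G -> exd v (fun p => F p + G p).
Proof. move=> HF HG p; apply: ex_derive_plus; [apply HF|apply HG]. Qed.

Lemma exd_mult v (F G : fn) : exd v F -> exd v G -> exd v (fun p => F p * G p).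
Proof. move=> HF HG p; apply: ex_derive_mult; [apply HF|apply HG]. Qed.

Lemma iter_plus vs (F G : fn) :
  (forall ws w, (length ws < length vs)%coq_nat -> exd w (iter_pd ws F) /\ exd w (iter_pd ws G)) ->
  iter_pd vs (fun p => F p + G p) = fun p => iter_pd vs F p + iter_pd vs G p.
Proof.
elim: vs => [|w vs IH] H //=.
rewrite /iter_pd /= -!/(iter_pd vs _) IH.
- case: (H vs w) => /= [|H1 H2]; first lia.
  by rewrite pd_plus.
- move=> ws w' Hl; apply H => /=; lia.
Qed.

Lemma Sm_plus (S : list var) f g : Sm S f -> Sm S g -> Sm S (fun p => f p + g p).
Proof.
move=> [Hdf [Hef Hcf]] [Hdg [Heg Hcg]]; split.
  move=> p q H; by rewrite (Hdf p q H) (Hdg p q H).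
have E : forall vs, iter_pd vs (fun p => f p + g p) = fun p => iter_pd vs f p + iter_pd vs g p.
  move=> vs; apply iter_plus=> ws w _; split; [apply Hef|apply Heg].
split=> vs; rewrite E.
- move=> w; apply exd_plus; [apply Hef|apply Heg].
- by apply cont_on_plus.
Qed.

Lemma Sm_mult_aux (S : list var) k : forall vs, (length vs <= k)%coq_nat ->
  forall f g, Sm S f -> Sm S g ->
  (forall w, exd w (iter_pd vs (fun p => f p * g p))) /\ cont_on S (iter_pd vs (fun p => f p * g p)).
Proof.
have base : forall f g, Sm S f -> Sm S g ->
  (forall w, exd w (fun p => f p * g p)) /\ cont_on S (fun p => f p * g p).
  move=> f g [_ [Hef Hcf]] [_ [Heg Hcg]]; split.
  - move=> w; apply exd_mult; [apply (Hef nil)|apply (Heg nil)].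
  - apply cont_on_mult; [apply (Hcf nil)|apply (Hcg nil)].
elim: k => [|k IH] vs Hl f g Hf Hg.
- have -> : vs = nil by case: vs Hl => //= a l; lia.
  by apply base.
- case: vs Hl => [|a l] Hl; first by apply base.
  have Hne : a :: l <> nil by [].
  case: (exists_last Hne) => vs' [w Evs]; rewrite Evs.
  have Hl' : (length vs' <= k)%coq_nat.
    have := f_equal (@length _) Evs; rewrite app_length /= => E; simpl in Hl; lia.
  rewrite /iter_pd fold_right_app /= -/(iter_pd vs' _).
  have [_ [Hef _]] := Hf; have [_ [Heg _]] := Hg.
  rewrite pd_mult; [|apply (Hef nil)|apply (Heg nil)].
  have Hf' := Sm_pd w Hf. have Hg' := Sm_pd w Hg.
  rewrite iter_plus.
  + case: (IH vs' Hl' _ _ Hf' Hg) => A1 B1.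
    case: (IH vs' Hl' _ _ Hf Hg') => A2 B2.
    split; [move=> w'; by apply exd_plus | by apply cont_on_plus].
  + move=> ws w' Hws; split.
    * apply (IH ws); [lia|done|done].
    * apply (IH ws); [lia|done|done].
Qed.

Lemma Sm_mult (S : list var) f g : Sm S f -> Sm S g -> Sm S (fun p => f p * g p).
Proof.
move=> Hf Hg; split.
  move=> p q H; by rewrite (Hf.1 p q H) (Hg.1 p q H).
split=> vs; case: (Sm_mult_aux (le_n (length vs)) Hf Hg) => //.
Qed.

Lemma Sm_scal (S : list var) c f : Sm S f -> Sm S (fun p => c * f p).
Proof. move=> Hf; apply: (Sm_mult (Sm_const S c) Hf). Qed.

Lemma Sm_opp (S : list var) f : Sm S f -> Sm S (fun p => - f p).
Proof. move=> Hf; apply: (Sm_ext _ (Sm_scal (-1) Hf)) => p; ring. Qed.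

End P3.

Section P4.
Context (n : nat).
Local Notation m := n.+2.
Local Notation var := (@Defs.var n).
Local Notation Point := (@Defs.Point n).
Local Notation fn := (@Defs.fn n).

Definition inP (P : var -> Prop) (f : fn) := exists S : list var, List.Forall P S /\ Sm S f.

Section InP.
Variable P : var -> Prop.

Lemma inP_ext (f g : fn) : (forall p, f p = g p) -> inP P f -> inP P g.
Proof. by move=> H; rewrite (functional_extensionality _ _ H). Qed.

Lemma inP_const c : inP P (fun _ => c).
Proof. exists nil; split=> //; apply Sm_const. Qed.

Lemma inP_proj v : P v -> inP P (fun p => p v).
Proof. move=> Hv; exists (v :: nil); split; [by constructor|apply Sm_proj; by left]. Qed.

Lemma inP_pd f v : inP P f -> inP P (pd v f).
Proof. case=> S [HS Hf]; exists S; split=> //; by apply Sm_pd. Qed.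

Lemma inP_plus f g : inP P f -> inP P g -> inP P (fun p => f p + g p).
Proof.
case=> S1 [H1 F1] [S2 [H2 F2]]; exists (app S1 S2); split; first by apply List.Forall_app.
apply Sm_plus; apply: Sm_mono; try eassumption; [apply incl_appl|apply incl_appr]; apply incl_refl.
Qed.

Lemma inP_mult f g : inP P f -> inP P g -> inP P (fun p => f p * g p).
Proof.
case=> S1 [H1 F1] [S2 [H2 F2]]; exists (app S1 S2); split; first by apply List.Forall_app.
apply Sm_mult; apply: Sm_mono; try eassumption; [apply incl_appl|apply incl_appr]; apply incl_refl.
Qed.

Lemma inP_scal c f : inP P f -> inP P (fun p => c * f p).
Proof. move=> H; apply: inP_mult H; apply inP_const. Qed.

Lemma inP_opp f : inP P f -> inP P (fun p => - f p).
Proof. move=> H; apply: (inP_ext _ (inP_scal (-1) H)) => p; ring. Qed.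

Lemma inP_minus f g : inP P f -> inP P g -> inP P (fun p => f p - g p).
Proof. move=> H1 H2; by apply inP_plus => //; apply inP_opp. Qed.

Lemma inP_lsum (S : list var) (F : var -> fn) : (forall v, In v S -> inP P (F v)) ->
  inP P (fun p => lsum S (fun v => F v p)).
Proof.
elim: S => [|v S IH] H /=; first by apply inP_const.
apply inP_plus; [apply H; by left|apply IH=> u Hu; apply H; by right].
Qed.

Lemma inP_big (I : Type) (l : seq I) (Q : pred I) (F : I -> fn) : (forall i, Q i -> inP P (F i)) ->
  inP P (fun p => \big[Rplus/0]_(i <- l | Q i) F i p).
Proof.
move=> H; elim: l => [|a l IH].
- apply: (inP_ext _ (inP_const 0)) => p; by rewrite big_nil.
- case E: (Q a).
  + apply: (inP_ext _ (inP_plus (H a E) IH)) => p; by rewrite big_cons E.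
  + apply: (inP_ext _ IH) => p; by rewrite big_cons E.
Qed.

End InP.

Lemma inP_weaken (P Q : var -> Prop) f : (forall v, P v -> Q v) -> inP P f -> inP Q f.
Proof. move=> H [S [HS Hf]]; exists S; split=> //; apply: List.Forall_impl HS; exact H. Qed.

Lemma Dder_chain (S : list var) (w : Point -> Point) f p : NoDup S -> Sm S f ->
  is_derive (fun s => f (fun v => p v + s * w p v)) 0 (lsum S (fun v => w p v * pd v f p)).
Proof. move=> HN Hf; exact: (chain HN (Sm_C1 Hf) p (w p)). Qed.

Lemma Dder_lsum (S : list var) (w : Point -> Point) f p : NoDup S -> Sm S f ->
  Dder w f p = lsum S (fun v => w p v * pd v f p).
Proof. move=> HN Hf; rewrite /Dder; apply is_derive_unique; exact: Dder_chain. Qed.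

Lemma inP_Sm (P : var -> Prop) f : inP P f -> exists S, List.Forall P S /\ NoDup S /\ Sm S f.
Proof.
case=> S [HS Hf]; exists (nodup (@var_dec n) S); split; last split.
- apply List.Forall_forall=> v; rewrite nodup_In; by apply List.Forall_forall.
- apply NoDup_nodup.
- by apply Sm_dedup.
Qed.

Lemma inP_Dder (P : var -> Prop) (w : Point -> Point) f : inP P f ->
  (forall v, P v -> inP P (fun p => w p v)) -> inP P (Dder w f).
Proof.
move=> Hf Hw; case: (inP_Sm Hf) => S [HS [HN HSm]].
apply: (inP_ext (f := fun p => lsum S (fun v => w p v * pd v f p))).
  move=> p; by rewrite (Dder_lsum _ _ HN HSm).
apply inP_lsum=> v Hv; apply inP_mult.
- apply Hw; move/List.Forall_forall: HS; by apply.
- exists S; split=> //; by apply Sm_pd.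
Qed.

Lemma ex_Dder (P : var -> Prop) (w : Point -> Point) f p : inP P f ->
  ex_derive (fun s => f (fun v => p v + s * w p v)) 0.
Proof.
move=> Hf; case: (inP_Sm Hf) => S [HS [HN HSm]]; exists (lsum S (fun v => w p v * pd v f p)); by apply: Dder_chain.
Qed.

End P4.

Section P5.
Context (n : nat).
Local Notation m := n.+2.
Local Notation var := (@Defs.var n).
Local Notation Point := (@Defs.Point n).
Local Notation fn := (@Defs.fn n).

Variable P : var -> Prop.
Hypothesis HP1 : forall v, P v -> allowed v = true.
Hypothesis HP2 : forall v, allowed v = true -> v <> Vt n -> P v.

Lemma addu0 (i : mi n) (a : 'I_m) : a != ord0 -> addu i a ord0 = i ord0.
Proof. move=> Ha; rewrite /addu ffunE eq_sym (negbTE Ha); by rewrite addn0. Qed.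

Lemma inP_var v : allowed v = true -> v <> Vt n -> inP P (fun p => p v).
Proof. move=> H1 H2; apply inP_proj; by apply HP2. Qed.

Lemma inP_sumN (F : 'I_m -> fn) : (forall a, a != ord0 -> inP P (F a)) ->
  inP P (fun p => sumN (fun a => F a p)).
Proof. move=> H; rewrite /sumN; by apply: inP_big. Qed.

Lemma inP_sumM (F : 'I_m -> fn) : (forall a, inP P (F a)) ->
  inP P (fun p => sumM (fun a => F a p)).
Proof. move=> H; rewrite /sumM; by apply: inP_big. Qed.

Lemma inP_U (l mu : 'I_m) : inP P (fun p => U l mu p).
Proof.
rewrite /U; case H: ((l == ord0) && (mu == ord0)).
- apply inP_opp; apply inP_sumN=> a Ha; apply inP_var => //=; by rewrite Ha.
- apply inP_var => //=.
  move/negbT: H; case/nandP => H; first by rewrite H.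
  case E: (l != ord0) => //=.
  have El : l = ord0 by apply/eqP; move/negbFE: E.
  by rewrite /e1 addu0 // /mi0 ffunE.
Qed.

Lemma inP_Phi : inP P (@Phi n).
Proof.
rewrite /Phi; apply inP_plus.
- apply inP_sumN=> a Ha; apply inP_var => //=.
  by rewrite /e2 addu0 // /e1 addu0 // /mi0 ffunE.
- apply inP_sumM=> l; apply inP_sumM=> mu; apply inP_mult; apply inP_U.
Qed.

Lemma inP_wN (a : 'I_m) v : a != ord0 -> P v -> inP P (fun p => wN a p v).
Proof.
move=> Ha Hv; have := HP1 Hv; case: v Hv => [|nu|mu i|i] Hv /= Hal.
- apply inP_const.
- case: (nu == a); apply inP_const.
- apply inP_var => //=; by rewrite addu0.
- apply inP_var => //=; by rewrite addu0.
Qed.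

Lemma inP_Dalpha (a : 'I_m) f : a != ord0 -> inP P f -> inP P (Dalpha a f).
Proof. move=> Ha Hf; rewrite /Dalpha; apply: (inP_Dder (w := wN a) Hf) => v Hv; by apply inP_wN. Qed.

Lemma inP_DN (i : mi n) f : inP P f -> inP P (DN i f).
Proof.
rewrite /DN; elim: (enum 'I_m) => //= a l IH Hf.
have Hl := IH Hf.
case Ha: (a == ord0) => //.
elim: (i a) => //= k IHk; apply inP_Dalpha; [by rewrite Ha|done].
Qed.

Lemma inP_w1 v : P v -> inP P (fun p => w1 p v).
Proof.
move=> Hv; have := HP1 Hv; case: v Hv => [|nu|mu i|i] Hv /= Hal.
- apply inP_const.
- case: (nu == ord0); apply inP_const.
- case Hmu: (mu == ord0).
  + apply inP_opp; apply inP_sumN=> b Hb; apply inP_var => //=; by rewrite Hb.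
  + apply inP_var => //=; by rewrite Hmu.
- case Hi: (i ord0 == 0%N).
  + apply inP_var => //=; rewrite /addu ffunE eqxx; by move/eqP: Hi => ->.
  + apply inP_opp; apply inP_DN; apply inP_Phi.
Qed.

Lemma inP_D1 f : inP P f -> inP P (D1 f).
Proof. move=> Hf; rewrite /D1; apply: (inP_Dder (w := @w1 n) Hf) => v Hv; by apply inP_w1. Qed.

Lemma inP_Dtot mu f : inP P f -> inP P (Dtot mu f).
Proof.
rewrite /Dtot; case H: (mu == ord0) => Hf; first by apply inP_D1.
by apply inP_Dalpha => //; rewrite H.
Qed.

Lemma inP_Dmi (i : mi n) f : inP P f -> inP P (Dmi i f).
Proof.
rewrite /Dmi; elim: (enum 'I_m) => //= a l IH Hf.
have Hl := IH Hf.
elim: (i a) => /= [|k IHk]; [by []|by apply inP_Dtot].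
Qed.

End P5.

Section P6.
Context (n : nat).
Local Notation m := n.+2.
Local Notation var := (@Defs.var n).
Local Notation Point := (@Defs.Point n).
Local Notation fn := (@Defs.fn n).

Lemma pd_upd2 (g : fn) u v (p : Point) a b : u <> v ->
  pd u g (upd (upd p u a) v b) = Derive (fun s => g (upd (upd p u s) v b)) a.
Proof.
move=> H; rewrite /pd upd_other // upd_same; apply Derive_ext=> s.
by rewrite (upd_comm _ _ _ (nesym H)) upd_upd.
Qed.

Lemma pd_upd2' (g : fn) u v (p : Point) a b :
  pd v g (upd (upd p u a) v b) = Derive (fun s => g (upd (upd p u a) v s)) b.
Proof. rewrite /pd upd_same; apply Derive_ext=> s; by rewrite upd_upd. Qed.

Lemma cont2d (S : list var) (h : fn) u v (p : Point) x y : cont_on S h ->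
  continuity_2d_pt (fun a b => h (upd (upd p u a) v b)) x y.
Proof.
move=> H eps; case: (H (upd (upd p u x) v y) eps (cond_pos eps)) => del [Hd Q].
exists (mkposreal _ Hd) => a b /= Ha Hb; apply Q=> w _.
case: (var_dec w v) => [->|Hwv]; first by rewrite !upd_same.
rewrite !(upd_other _ _ Hwv).
case: (var_dec w u) => [->|Hwu]; first by rewrite !upd_same.
rewrite !upd_other // Rminus_eq_0 Rabs_R0 //.
Qed.

Lemma pd_comm (S : list var) f u v (p : Point) : Sm S f -> pd u (pd v f) p = pd v (pd u f) p.
Proof.
move=> Hf; case: (var_dec u v) => [->//|Huv].
have [_ [He Hc]] := Hf.
set G := fun a b => f (upd (upd p u a) v b).
have E1 : forall a b, Derive (fun z => Derive (fun t => G z t) b) a = pd u (pd v f) (upd (upd p u a) v b).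
  move=> a b; rewrite pd_upd2 //; apply Derive_ext=> z; by rewrite pd_upd2'.
have E2 : forall a b, Derive (fun z => Derive (fun t => G t z) a) b = pd v (pd u f) (upd (upd p u a) v b).
  move=> a b; rewrite pd_upd2'; apply Derive_ext=> z; by rewrite pd_upd2.
have := @Schwarz G (p u) (p v).
rewrite E1 E2 !upd_id; apply.
- exists (mkposreal 1 Rlt_0_1) => a b _ _; split; last split; last split.
  + have := He nil u (upd (upd p u a) v b); rewrite upd_other // upd_same => X.
    apply: (ex_derive_ext _ _ _ _ X) => s /=; by rewrite /G (upd_comm _ _ _ (nesym Huv)) upd_upd.
  + have := He nil v (upd (upd p u a) v b); rewrite upd_same => X.
    apply: (ex_derive_ext _ _ _ _ X) => s /=; by rewrite /G upd_upd.
  + have := He (v :: nil) u (upd (upd p u a) v b); rewrite upd_other // upd_same => X.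
    apply: (ex_derive_ext _ _ _ _ X) => s /=; by rewrite (upd_comm _ _ _ (nesym Huv)) upd_upd pd_upd2'.
  + have := He (u :: nil) v (upd (upd p u a) v b); rewrite upd_same => X.
    apply: (ex_derive_ext _ _ _ _ X) => s /=; by rewrite upd_upd pd_upd2.
- apply: (continuity_2d_pt_ext _ _ _ _ (fun a b => esym (E1 a b))).
  exact: (cont2d u v p (p u) (p v) (Hc (u :: v :: nil))).
- apply: (continuity_2d_pt_ext _ _ _ _ (fun a b => esym (E2 a b))).
  exact: (cont2d u v p (p u) (p v) (Hc (v :: u :: nil))).
Qed.

End P6.

Section P7.
Context (n : nat).
Local Notation m := n.+2.
Local Notation var := (@Defs.var n).
Local Notation Point := (@Defs.Point n).
Local Notation fn := (@Defs.fn n).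

Definition PA (v : var) : Prop := allowed v = true.
Definition PAT (v : var) : Prop := allowed v = true /\ v <> Vt n.

Lemma inA_iff (f : fn) : inA f <-> inP PA f.
Proof. by []. Qed.

Lemma inA_Dtot mu (f : fn) : inP PA f -> inP PA (Dtot mu f).
Proof. apply inP_Dtot; by []. Qed.

Lemma inA_Dmi i (f : fn) : inP PA f -> inP PA (Dmi i f).
Proof. apply inP_Dmi; by []. Qed.

Lemma inAT_Phi : inP PAT (@Phi n).
Proof. apply inP_Phi => v H1 H2; by split. Qed.

Lemma Dder_plus (P : var -> Prop) (w : Point -> Point) (f g : fn) p : inP P f -> inP P g ->
  Dder w (fun q => f q + g q) p = Dder w f p + Dder w g p.
Proof.
move=> Hf Hg; rewrite /Dder Derive_plus //; [exact: ex_Dder Hf|exact: ex_Dder Hg].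
Qed.

Lemma Dder_scal (w : Point -> Point) c (f : fn) p : Dder w (fun q => c * f q) p = c * Dder w f p.
Proof. by rewrite /Dder Derive_scal. Qed.

Lemma Dder_const (w : Point -> Point) c (p : Point) : Dder w (fun _ => c) p = 0.
Proof. by rewrite /Dder Derive_const. Qed.

Lemma Dder_big (P : var -> Prop) (w : Point -> Point) (I : Type) (l : seq I) (Q : pred I) (F : I -> fn) p :
  (forall i, Q i -> inP P (F i)) ->
  Dder w (fun q => \big[Rplus/0]_(i <- l | Q i) F i q) p = \big[Rplus/0]_(i <- l | Q i) Dder w (F i) p.
Proof.
move=> H; elim: l => [|a l IH].
- have -> : (fun q => \big[Rplus/0]_(i <- [::] | Q i) F i q) = (fun _ => 0).
    apply functional_extensionality=> q; by rewrite big_nil.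
  by rewrite Dder_const big_nil.
- case E: (Q a).
  + have -> : (fun q => \big[Rplus/0]_(i <- a :: l | Q i) F i q) =
              (fun q => F a q + \big[Rplus/0]_(i <- l | Q i) F i q).
      apply functional_extensionality=> q; by rewrite big_cons E.
    rewrite big_cons E (Dder_plus (P := P)) ?IH //; [by apply H|by apply inP_big].
  + have -> : (fun q => \big[Rplus/0]_(i <- a :: l | Q i) F i q) =
              (fun q => \big[Rplus/0]_(i <- l | Q i) F i q).
      apply functional_extensionality=> q; by rewrite big_cons E.
    by rewrite big_cons E.
Qed.

Lemma Dtot_plus (P : var -> Prop) mu (f g : fn) p : inP P f -> inP P g ->
  Dtot mu (fun q => f q + g q) p = Dtot mu f p + Dtot mu g p.
Proof. rewrite /Dtot /D1 /Dalpha; case: (mu == ord0); exact: Dder_plus. Qed.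

Lemma Dtot_scal mu c (f : fn) p : Dtot mu (fun q => c * f q) p = c * Dtot mu f p.
Proof. rewrite /Dtot /D1 /Dalpha; case: (mu == ord0); exact: Dder_scal. Qed.

Lemma Dtot_const mu c (p : Point) : Dtot mu (fun _ => c) p = 0.
Proof. rewrite /Dtot /D1 /Dalpha; case: (mu == ord0); exact: Dder_const. Qed.

Lemma lsum_ext (S : list var) (F G : var -> R) : (forall v, In v S -> F v = G v) -> lsum S F = lsum S G.
Proof.
elim: S => //= a S IH H; rewrite H; last by left.
by rewrite IH // => v Hv; apply H; right.
Qed.

Lemma Derive_lsum (S : list var) (c : var -> R) (g : var -> R -> R) x :
  (forall v, In v S -> ex_derive (g v) x) ->
  ex_derive (fun s => lsum S (fun v => c v * g v s)) x /\
  Derive (fun s => lsum S (fun v => c v * g v s)) x = lsum S (fun v => c v * Derive (g v) x).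
Proof.
elim: S => [|a S IH] H /=.
- split; [apply ex_derive_const|apply Derive_const].
- have [IH1 IH2] := IH (fun v Hv => H v (or_intror Hv)).
  have Ha : ex_derive (fun s => c a * g a s) x by apply ex_derive_scal; apply H; left.
  split; first by apply: ex_derive_plus.
  rewrite Derive_plus // Derive_scal IH2 //.
Qed.

Lemma pdVt_Dder (W : Point -> Point) (f : fn) p : inP PA f ->
  (forall v, allowed v = true -> forall (q : Point) s, W (upd q (Vt n) s) v = W q v) ->
  pd (Vt n) (Dder W f) p = Dder W (pd (Vt n) f) p.
Proof.
move=> Hf HW; case: (inP_Sm Hf) => S [HS [HN HSm]].
rewrite (Dder_lsum _ _ HN (Sm_pd (Vt n) HSm)).
rewrite /pd (Derive_ext _ (fun s => lsum S (fun v => W p v * pd v f (upd p (Vt n) s)))).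
- have HD : forall v, In v S -> ex_derive (fun s => pd v f (upd p (Vt n) s)) (p (Vt n)).
    move=> v Hv; have [_ [He _]] := HSm; have := He (v :: nil) (Vt n) p.
    by rewrite /iter_pd /=.
  have [_ ->] := @Derive_lsum S (fun v => W p v) (fun v s => pd v f (upd p (Vt n) s)) (p (Vt n)) HD.
  apply lsum_ext=> v Hv; congr (_ * _).
  exact: (pd_comm (Vt n) v p HSm).
- move=> s; rewrite (Dder_lsum _ _ HN HSm); apply lsum_ext=> v Hv; rewrite HW //.
  move/List.Forall_forall: HS; by apply.
Qed.

End P7.

Section P8.
Context (n : nat).
Local Notation m := n.+2.
Local Notation var := (@Defs.var n).
Local Notation Point := (@Defs.Point n).
Local Notation fn := (@Defs.fn n).
Local Notation PA := (@PA n).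
Local Notation PAT := (@PAT n).

Variable Ec : 'I_m -> fn.
Variable E0 : fn.
Hypothesis HE : E_admissible Ec E0.

Lemma inA_ev (f : fn) : inP PA f -> inP PA (ev Ec E0 f).
Proof.
move=> Hf; rewrite /ev; apply: (inP_Dder (w := wev Ec E0) Hf) => v Hv.
case: v Hv => [|nu|mu i|i] Hv /=; try apply inP_const.
- apply inA_Dmi; exact: (HE.1 mu).
- apply inA_Dmi; exact: HE.2.1.
Qed.

Lemma inA_Dt (f : fn) : inP PA f -> inP PA (Dt Ec E0 f).
Proof.
move=> Hf; rewrite /Dt; apply: (inP_Dder (w := wt Ec E0) Hf) => v Hv.
case: v Hv => [|nu|mu i|i] Hv /=; try apply inP_const.
- apply inA_Dmi; exact: (HE.1 mu).
- apply inA_Dmi; exact: HE.2.1.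
Qed.

Lemma lsum_wt (S : list var) (X : var -> R) p : NoDup S ->
  lsum S (fun v => wt Ec E0 p v * X v) =
  (if in_dec (@var_dec n) (Vt n) S then X (Vt n) else 0) + lsum S (fun v => wev Ec E0 p v * X v).
Proof.
elim: S => [|a S IH] HN; first by rewrite /=; ring.
move/NoDup_cons_iff: HN => [Ha HN].
have LC : forall (F : var -> R), lsum (a :: S) F = F a + lsum S F by [].
rewrite !LC IH //.
destruct (in_dec (@var_dec n) (Vt n) S) as [H1|H1];
destruct (in_dec (@var_dec n) (Vt n) (a :: S)) as [H2|H2].
- have Hne : a <> Vt n by move=> E; subst.
  have -> : wt Ec E0 p a = wev Ec E0 p a by case: a Hne {Ha H2 LC}.
  simpl; ring.
- by case: H2; right.
- case: H2 => [E|//]; subst a; rewrite /=; ring.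
- have Hne : a <> Vt n by move=> E; subst; case: H2; left.
  have -> : wt Ec E0 p a = wev Ec E0 p a by case: a Hne {Ha H2 LC}.
  simpl; ring.
Qed.

Lemma Dt_split (f : fn) p : inP PA f -> Dt Ec E0 f p = pd (Vt n) f p + ev Ec E0 f p.
Proof.
move=> Hf; case: (inP_Sm Hf) => S [HS [HN HSm]].
rewrite /Dt /ev !(Dder_lsum _ _ HN HSm) lsum_wt //.
case: (in_dec (@var_dec n) (Vt n) S) => // H.
by rewrite (pd_notin _ HSm.1 H).
Qed.

Lemma indepT (g : fn) (q : Point) s : inP PAT g -> g (upd q (Vt n) s) = g q.
Proof.
case=> S [HS HSm]; apply: (dep_on_upd _ _ HSm.1) => H.
move/List.Forall_forall: HS => HS; by case: (HS _ H).
Qed.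

Lemma pdVt_Dtot mu (f : fn) p : inP PA f -> pd (Vt n) (Dtot mu f) p = Dtot mu (pd (Vt n) f) p.
Proof.
move=> Hf; rewrite /Dtot /D1 /Dalpha; case H: (mu == ord0).
- apply pdVt_Dder => // v Hv q s.
  case: (var_dec v (Vt n)) => [->//|Hne].
  apply: (indepT (g := fun p => w1 p v)).
  apply inP_w1; solve [ by move=> w [] | by move=> w H1 H2; split | by split | by rewrite H ].
- by apply pdVt_Dder.
Qed.

Lemma Dt_Dtot mu (f : fn) p : inP PA f -> Dt Ec E0 (Dtot mu f) p = Dtot mu (Dt Ec E0 f) p.
Proof.
move=> Hf.
have HD := inA_Dtot mu Hf.
rewrite Dt_split // pdVt_Dtot //.
have := (HE.2.2.2.2 mu f Hf p) => ->.
have -> : Dt Ec E0 f = fun q => pd (Vt n) f q + ev Ec E0 f q.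
  apply functional_extensionality=> q; exact: Dt_split.
rewrite (Dtot_plus (P := PA)) //; [by apply inP_pd|by apply inA_ev].
Qed.

End P8.

Lemma big_R0 (I : Type) (l : seq I) (Q : pred I) (F : I -> R) :
  (forall i, Q i -> F i = 0) -> \big[Rplus/0]_(i <- l | Q i) F i = 0.
Proof.
move=> H; elim: l => [|a l IH]; first by rewrite big_nil.
rewrite big_cons; case E: (Q a) => //; by rewrite H // IH Rplus_0_r.
Qed.

Lemma big_Rplus (I : Type) (l : seq I) (Q : pred I) (F G : I -> R) :
  \big[Rplus/0]_(i <- l | Q i) (F i + G i) =
  \big[Rplus/0]_(i <- l | Q i) F i + \big[Rplus/0]_(i <- l | Q i) G i.
Proof.
elim: l => [|a l IH]; first by rewrite !big_nil Rplus_0_r.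
rewrite !big_cons; case: (Q a) => //; rewrite IH; ring.
Qed.

Lemma big_Rscal (I : Type) (l : seq I) (Q : pred I) (F : I -> R) c :
  c * \big[Rplus/0]_(i <- l | Q i) F i = \big[Rplus/0]_(i <- l | Q i) (c * F i).
Proof.
elim: l => [|a l IH]; first by rewrite !big_nil Rmult_0_r.
rewrite !big_cons; case: (Q a) => //; rewrite -IH; ring.
Qed.

Lemma big_Rext (I : Type) (l : seq I) (Q : pred I) (F G : I -> R) :
  (forall i, Q i -> F i = G i) ->
  \big[Rplus/0]_(i <- l | Q i) F i = \big[Rplus/0]_(i <- l | Q i) G i.
Proof.
move=> H; elim: l => [|a l IH]; first by rewrite !big_nil.
rewrite !big_cons; case E: (Q a) => //; by rewrite IH H.
Qed.

Section P9.
Context (n : nat).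
Local Notation m := n.+2.
Local Notation var := (@Defs.var n).
Local Notation Point := (@Defs.Point n).
Local Notation fn := (@Defs.fn n).
Local Notation hform := (@Defs.hform n).
Local Notation PA := (@PA n).

Variable Ec : 'I_m -> fn.
Variable E0 : fn.
Hypothesis HE : E_admissible Ec E0.

Lemma hf_ext (a b : hform) : (forall S p, a S p = b S p) -> a = b.
Proof.
move=> H; apply functional_extensionality=> S; apply functional_extensionality=> p; apply H.
Qed.

Definition coefA (om : hform) := forall S, inP PA (om S).

Lemma isH_coefA q (om : hform) : isH q om -> coefA om.
Proof. move=> H S; exact: (H S).2. Qed.

Lemma card_le_m (S : {set 'I_m}) : (#|S| <= m)%N.
Proof. have := max_card (mem S); by rewrite card_ord. Qed.

Lemma isH_out q (om : hform) : isH q om -> (q < 0 \/ Z.of_nat m < q)%Z -> forall S p, om S p = 0.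
Proof.
move=> H Hq S p; apply (H S).1 => E.
have := card_le_m S; move/leP => Hle; lia.
Qed.

Lemma isH_hzero q : isH q (@hzero n).
Proof. move=> S; split=> //; exact: inP_const. Qed.

Lemma isH_hadd q (a b : hform) : isH q a -> isH q b -> isH q (hadd a b).
Proof.
move=> Ha Hb S; split.
- move=> E p; rewrite /hadd ((Ha S).1 E p) ((Hb S).1 E p); ring.
- apply inP_plus; [exact: (Ha S).2|exact: (Hb S).2].
Qed.

Lemma isH_hscale q c (a : hform) : isH q a -> isH q (hscale c a).
Proof.
move=> Ha S; split.
- move=> E p; rewrite /hscale ((Ha S).1 E p); ring.
- apply inP_scal; exact: (Ha S).2.
Qed.

Lemma Dtot_zero mu (f : fn) p : (forall q, f q = 0) -> Dtot mu f p = 0.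
Proof.
move=> H; rewrite (functional_extensionality _ (fun _ => 0) H); exact: Dtot_const.
Qed.

Lemma Dt_zero (f : fn) p : (forall q, f q = 0) -> Dt Ec E0 f p = 0.
Proof.
move=> H; rewrite (functional_extensionality _ (fun _ => 0) H); exact: Dder_const.
Qed.

Lemma isH_dH q (om : hform) : isH q om -> isH (q + 1) (dH om).
Proof.
move=> H T; split.
- move=> E p; rewrite /dH; apply big_R0 => mu Hmu.
  rewrite Dtot_zero ?Rmult_0_r // => r; apply (H _).1.
  have := cardsD1 mu T; rewrite Hmu => Ec'; move=> E'; apply E.
  have -> : #|T| = (#|T :\ mu|).+1 by rewrite Ec'.
  lia.
- change (inP PA (dH om T)); rewrite /dH; apply inP_big => mu _. apply inP_scal; apply inA_Dtot; exact: (H _).2.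
Qed.

Lemma isH_hDt q (om : hform) : isH q om -> isH q (hDt Ec E0 om).
Proof.
move=> H S; split.
- move=> E p; rewrite /hDt; apply Dt_zero => r; exact: (H S).1 E r.
- apply inA_Dt => //; exact: (H S).2.
Qed.

Lemma dH_hadd (a b : hform) : coefA a -> coefA b -> dH (hadd a b) = hadd (dH a) (dH b).
Proof.
move=> Ha Hb; apply hf_ext=> T p; rewrite /dH /hadd -big_Rplus; apply big_Rext=> mu _.
rewrite (Dtot_plus (P := PA)) //; ring.
Qed.

Lemma dH_hscale c (a : hform) : dH (hscale c a) = hscale c (dH a).
Proof.
apply hf_ext=> T p; rewrite /dH /hscale big_Rscal; apply big_Rext=> mu _.
rewrite Dtot_scal; ring.
Qed.

Lemma dH_hzero : dH (@hzero n) = @hzero n.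
Proof.
apply hf_ext=> T p; rewrite /dH /hzero; apply big_R0=> mu _.
by rewrite Dtot_zero ?Rmult_0_r.
Qed.

Lemma hDt_hadd (a b : hform) : coefA a -> coefA b -> hDt Ec E0 (hadd a b) = hadd (hDt Ec E0 a) (hDt Ec E0 b).
Proof.
move=> Ha Hb; apply hf_ext=> T p; rewrite /hDt /hadd /Dt (Dder_plus (P := PA)) //.
Qed.

Lemma hDt_hscale c (a : hform) : hDt Ec E0 (hscale c a) = hscale c (hDt Ec E0 a).
Proof. apply hf_ext=> T p; by rewrite /hDt /hscale /Dt Dder_scal. Qed.

Lemma hDt_hzero : hDt Ec E0 (@hzero n) = @hzero n.
Proof. apply hf_ext=> T p; by rewrite /hDt /hzero Dt_zero. Qed.

Lemma hDt_dH (om : hform) : coefA om -> hDt Ec E0 (dH om) = dH (hDt Ec E0 om).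
Proof.
move=> H; apply hf_ext=> T p; rewrite /hDt /dH /Dt.
rewrite (Dder_big (P := PA)).
- apply big_Rext=> mu _; rewrite Dder_scal; congr (_ * _).
  exact: (Dt_Dtot HE).
- move=> mu _; apply inP_scal; apply inA_Dtot; exact: H.
Qed.

End P9.

Lemma cont_pt_of (f : R -> R) x0 :
  (forall eps, 0 < eps -> exists del, 0 < del /\ forall x, Rabs (x - x0) < del -> Rabs (f x - f x0) < eps) ->
  continuity_pt f x0.
Proof.
move=> H eps He; case: (H eps He) => del [Hd Q]; exists del; split=> // x [_ Hx].
by apply Q.
Qed.

Lemma const_of_deriv (g : R -> R) : (forall x, is_derive g x 0) -> forall a b, g a = g b.
Proof.
move=> H a b.
have := @MVT_gen g b a (fun _ => 0).
case.
- move=> x _; exact: H.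
- move=> x _; apply continuity_pt_filterlim; apply: ex_derive_continuous; eexists; exact: H.
- move=> c [_ E]; lra.
Qed.

Section P10.
Context (n : nat).
Local Notation m := n.+2.
Local Notation var := (@Defs.var n).
Local Notation Point := (@Defs.Point n).
Local Notation fn := (@Defs.fn n).
Local Notation hform := (@Defs.hform n).
Local Notation PA := (@PA n).

Lemma dep_on_iter (S : list var) (f : fn) vs : dep_on S f -> dep_on S (iter_pd vs f).
Proof. elim: vs => //= v vs IH H; apply dep_on_pd; exact: IH. Qed.

Lemma Sm_restrict (S T : list var) (f : fn) : Sm S f -> dep_on T f -> Sm T f.
Proof.
move=> [Hd [He Hc]] HT; split=> //; split=> // vs.
apply: (cont_on_dep (dep_on_iter vs HT)); exact: Hc.
Qed.

Lemma Sm_of_pd (S : list var) (G : fn) : dep_on S G -> (forall w, exd w G) -> cont_on S G ->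
  (forall w, Sm S (pd w G)) -> Sm S G.
Proof.
move=> Hd He Hc Hp; split=> //; split=> vs.
- case: vs => [|a l] //.
  have Hne : a :: l <> nil by [].
  case: (exists_last Hne) => vs' [w ->].
  rewrite /iter_pd fold_right_app /= -/(iter_pd vs' _).
  exact: (Hp w).2.1 vs'.
- case: vs => [|a l] //.
  have Hne : a :: l <> nil by [].
  case: (exists_last Hne) => vs' [w ->].
  rewrite /iter_pd fold_right_app /= -/(iter_pd vs' _).
  exact: (Hp w).2.2 vs'.
Qed.

Definition p0 : Point := fun _ => 0.

Lemma dep_Vt (f : fn) (p : Point) : dep_on (Vt n :: nil) f -> f p = f (upd p0 (Vt n) (p (Vt n))).
Proof. move=> H; apply H=> v [<-|[]]; by rewrite upd_same. Qed.

Variable Ec : 'I_m -> fn.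
Variable E0 : fn.
Hypothesis HE : E_admissible Ec E0.

Lemma Dt_Vt (f : fn) p : Sm (Vt n :: nil) f -> Dt Ec E0 f p = pd (Vt n) f p.
Proof.
move=> H; rewrite /Dt (Dder_lsum _ _ _ H); last by constructor; [case|constructor].
rewrite /lsum /=; ring.
Qed.

Lemma const_lemma (f : fn) : inP PA f -> dep_on (Vt n :: nil) f -> (forall p, Dt Ec E0 f p = 0) ->
  forall p, f p = f p0.
Proof.
move=> [S [_ HS]] Hd HD p.
have HV := Sm_restrict HS Hd.
have Hpd : forall q, pd (Vt n) f q = 0 by move=> q; rewrite -(Dt_Vt q HV).
have Hg : forall x, is_derive (fun t => f (upd p0 (Vt n) t)) x 0.
  move=> x; rewrite -(Hpd (upd p0 (Vt n) x)); apply pd_at_upd; exact: (HV.2.1 nil).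
rewrite (dep_Vt p Hd) (const_of_deriv Hg (p (Vt n)) 0).
by rewrite -{2}(upd_id p0 (Vt n)).
Qed.

Lemma antideriv (c0 : fn) : inP PA c0 -> dep_on (Vt n :: nil) c0 ->
  exists G : fn, inP PA G /\ dep_on (Vt n :: nil) G /\ forall p, Dt Ec E0 G p = c0 p.
Proof.
move=> [S [_ HS]] Hd.
have HV := Sm_restrict HS Hd.
set gam := fun t => c0 (upd p0 (Vt n) t).
have Hcont : forall t, continuous gam t.
  move=> t; apply continuity_pt_filterlim; apply cont_pt_of=> eps He.
  case: (HV.2.2 nil (upd p0 (Vt n) t) eps He) => del [Hdel Q].
  exists del; split=> // x Hx; apply Q=> v [<-|[]]; by rewrite !upd_same.
set Gam := fun x => RInt gam 0 x.
have HGam : forall x, is_derive Gam x (gam x).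
  move=> x; apply: (is_derive_RInt gam Gam 0); last exact: Hcont.
  exists (mkposreal 1 Rlt_0_1) => y _; apply: (RInt_correct gam 0 y); apply: ex_RInt_continuous => z _; exact: Hcont.
set G := fun p : Point => Gam (p (Vt n)).
have HdG : dep_on (Vt n :: nil) G by move=> p q H; rewrite /G H //; left.
have HpdG : pd (Vt n) G = c0.
  apply functional_extensionality=> p; rewrite /pd /G.
  rewrite (Derive_ext _ Gam); last by move=> s; rewrite upd_same.
  rewrite (is_derive_unique _ _ _ (HGam _)) /gam; by rewrite -dep_Vt.
have HexG : forall w, exd w G.
  move=> w; case: (var_dec w (Vt n)) => [->|Hw].
  - move=> p; apply: (ex_derive_ext Gam); first by move=> s; rewrite /G upd_same.
    eexists; exact: HGam.
  - apply: (exd_notin HdG); by case => // E; case: Hw.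
have HSmG : Sm (Vt n :: nil) G.
  apply Sm_of_pd => //.
  - move=> p eps He.
    have := ex_derive_continuous Gam (p (Vt n)) (ex_intro _ _ (HGam _)).
    move/continuity_pt_filterlim => Hc; case: (Hc eps He) => del [Hdel Q].
    exists del; split=> // q Hq; rewrite /G.
    case: (Req_dec (q (Vt n)) (p (Vt n))) => [->|Hne]; first by rewrite Rminus_eq_0 Rabs_R0.
    have := Q (q (Vt n)); rewrite /R_dist; apply; split; [split=> //; exact: nesym|apply Hq; by left].
  - move=> w; case: (var_dec w (Vt n)) => [->|Hw]; first by rewrite HpdG.
    apply: (Sm_ext _ (Sm_const _ 0)) => p; symmetry; apply: (pd_notin _ HdG).
    by case => // E; case: Hw.
exists G; split; last split=> //.
- exists (Vt n :: nil); split=> //; by constructor.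
- move=> p; by rewrite Dt_Vt // HpdG.
Qed.

End P10.

Section P11.
Local Open Scope R_scope.
Context (n : nat).
Local Notation m := n.+2.
Local Notation var := (@Defs.var n).
Local Notation Point := (@Defs.Point n).
Local Notation fn := (@Defs.fn n).
Local Notation hform := (@Defs.hform n).
Local Notation eform := (@Defs.eform n).
Local Notation PA := (@PA n).

Variable Ec : 'I_m -> fn.
Variable E0 : fn.
Hypothesis HE : E_admissible Ec E0.
Hypothesis HB : forall q : Z, (1 <= q <= Z.of_nat n.+2 - 2)%Z ->
     forall om : hform, ZH q om -> BH q om.
Hypothesis H0 : forall om : hform, isH 0%Z om ->
     (ZH 0%Z om <-> dep_on (Vt n :: nil) (om set0)).

Lemma dE_fst (x : eform) S p : dE Ec E0 x = @ezero n -> Dt Ec E0 (x.2 S) p - dH x.1 S p = 0.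
Proof. move=> H; have := f_equal fst H => /= H1; by have := f_equal (fun h => h S p) H1. Qed.

Lemma dE_snd (x : eform) : dE Ec E0 x = @ezero n -> dH x.2 = @hzero n.
Proof. move=> H; exact: (f_equal snd H). Qed.

Lemma c_closed q (x : eform) (eta : hform) : ZE Ec E0 q x -> isH (q - 1) eta -> dH eta = x.2 ->
  ZH (q - 1) (hadd (hDt Ec E0 eta) (hscale (-1) x.1)).
Proof.
move=> [[Hx1 Hx2] Hd] He Heq; split.
- apply isH_hadd; [exact: (isH_hDt HE He)|exact: isH_hscale].
- rewrite dH_hadd; [|exact: (isH_coefA (isH_hDt HE He))|exact: (isH_coefA (isH_hscale (-1) Hx1))].
  rewrite dH_hscale -hDt_dH; last exact: isH_coefA He.
  rewrite Heq; apply hf_ext=> S p; rewrite /hadd /hscale /hDt /hzero.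
  have := dE_fst S p Hd; lra.
all: exact HE.
Qed.

Lemma exact_step q (x : eform) (eta zeta g : hform) : ZE Ec E0 q x -> isH (q - 1) eta -> dH eta = x.2 ->
  isH (q - 2) zeta -> isH (q - 1) g -> dH g = @hzero n ->
  hadd (hDt Ec E0 eta) (hscale (-1) x.1) = hadd (dH zeta) (hDt Ec E0 g) -> BE Ec E0 q x.
Proof.
move=> [[Hx1 Hx2] Hd] He Heq Hz Hg Hdg Hc.
exists (zeta, hadd eta (hscale (-1) g)); split.
- split; last by apply isH_hadd => //; apply isH_hscale.
  by have -> : (q - 1 - 1 = q - 2)%Z by lia.
- case: x Hx1 Hx2 Hd Heq Hc => a b Hx1 Hx2 Hd Heq Hc /=.
  congr pair.
  + apply hf_ext=> S p; rewrite /hadd /hscale /=.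
    rewrite /Dt (Dder_plus (P := PA)); last first.
      apply inP_scal; exact: (Hg S).2.
      exact: (He S).2.
    rewrite Dder_scal.
    have := f_equal (fun h => h S p) Hc; rewrite /hadd /hscale /hDt /Dt /= => E.
    lra.
  + rewrite dH_hadd; [|exact: isH_coefA He|exact: isH_coefA (isH_hscale (-1) Hg)].
    rewrite dH_hscale Hdg Heq /=; apply hf_ext=> S p; rewrite /hadd /hscale /hzero; ring.
Qed.

Lemma Hc_zero (c : hform) : ZH 0 c -> exists zeta g : hform, isH (-1) zeta /\ isH 0 g /\ dH g = @hzero n /\
  hadd (@hzero n) c = hadd (dH zeta) (hDt Ec E0 g).
Proof.
move=> Hc; have [HcH _] := Hc.
have Hdep := (H0 HcH).1 Hc.
case: (antideriv Ec E0 ((HcH set0).2) Hdep) => G [HG [HdG HDG]].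
set g : hform := fun S => if S == set0 then G else fun _ => 0.
have Hg : isH 0 g.
  move=> S; split.
  - move=> E p; rewrite /g; case: eqP => // ES; subst; by rewrite cards0 in E.
  - rewrite /g; case: eqP => _ //; exact: inP_const.
exists (@hzero n), g; split; first exact: isH_hzero.
split=> //; split.
- apply ((H0 Hg).2); by rewrite /g eqxx.
- rewrite dH_hzero; apply hf_ext=> S p; rewrite /hadd /hzero /hDt /g.
  case: eqP => [->|ES].
  + by rewrite HDG Rplus_0_l.
  + rewrite Dt_zero // !Rplus_0_l; apply (HcH S).1 => E.
    apply ES; apply/eqP; rewrite -cards_eq0; apply/eqP; lia.
Qed.

Lemma Hc_all q : (1 <= q <= Z.of_nat m - 1)%Z -> forall c : hform, ZH (q - 1) c ->
  exists zeta g : hform, isH (q - 2) zeta /\ isH (q - 1) g /\ dH g = @hzero n /\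
  hadd (@hzero n) c = hadd (dH zeta) (hDt Ec E0 g).
Proof.
move=> Hq c Hc.
case: (Z.eq_dec q 1) => [E|Hne].
- subst q; have -> : (1 - 2 = -1)%Z by []. have -> : (1 - 1 = 0)%Z by [].
  apply Hc_zero; by rewrite -[0%Z]/(1 - 1)%Z.
- have [zeta [Hz Hdz]] := HB (q := q - 1) ltac:(lia) Hc.
  exists zeta, (@hzero n); split; first by have <- : (q - 1 - 1 = q - 2)%Z by lia.
  split; first exact: isH_hzero.
  split; first exact: dH_hzero.
  rewrite hDt_hzero Hdz; apply hf_ext=> S p; rewrite /hadd /hzero; ring.
Qed.

Lemma exact_full q (x : eform) : (1 <= q <= Z.of_nat m - 1)%Z -> ZE Ec E0 q x -> BH q x.2 -> BE Ec E0 q x.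
Proof.
move=> Hq Hx [eta [He Heq]].
have Hc := c_closed Hx He Heq.
case: (Hc_all Hq Hc) => zeta [g [Hz [Hg [Hdg E]]]].
apply: (exact_step Hx He Heq Hz Hg Hdg).
rewrite -E; apply hf_ext=> S p; rewrite /hadd /hzero; ring.
Qed.


Lemma BE_trivial q (x : eform) : ZE Ec E0 q x -> (q < 0 \/ Z.of_nat n.+2 + 1 < q)%Z -> BE Ec E0 q x.
Proof.
move=> [[Hx1 Hx2] Hd] Hq; exists (@ezero n); split.
- split; exact: isH_hzero.
- case: x Hx1 Hx2 Hd => a b /= Hx1 Hx2 Hd; rewrite /dE /ezero /=; congr pair.
  + apply hf_ext=> S p; rewrite Dt_zero // dH_hzero /hzero (isH_out Hx1) //; [ring|lia].
  + rewrite dH_hzero; apply hf_ext=> S p; rewrite /hzero (isH_out Hx2) //; lia.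
Qed.

Lemma part_a : forall q : Z, ((q < 0)%Z \/ (1 <= q <= Z.of_nat n.+2 - 2)%Z \/ (Z.of_nat n.+2 + 1 < q)%Z) ->
     forall x, ZE Ec E0 q x -> BE Ec E0 q x.
Proof.
move=> q Hq x Hx; case: Hq => [Hneg|[Hmid|Hbig]].
- apply BE_trivial => //; by left.
- apply exact_full => //; first lia.
  apply (HB Hmid); split; first exact: Hx.1.2.
  exact: dE_snd Hx.2.
- apply BE_trivial => //; by right.
Qed.

Lemma pow_m1_sq k : (-1) ^ k * (-1) ^ k = 1.
Proof. elim: k => [|k IH] /=; first ring. nra. Qed.

Lemma dH_set0 (om : hform) p : dH om set0 p = 0.
Proof. rewrite /dH; apply big_R0 => mu; by rewrite in_set0. Qed.

Lemma part_b : quot_iso (@eadd n) (@escale n) Rplus Rmult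
    (ZE Ec E0 0%Z) (BE Ec E0 0%Z) (fun _ : R => True) (fun r : R => r = 0%R).
Proof.
exists (fun x : eform => x.2 set0 (@p0 n)); split; last split; last split; last split; last split.
- by [].
- by [].
- by [].
- move=> x [y [_ <-]] /=; exact: dH_set0.
- move=> r _.
  exists (@hzero n, fun S (_ : Point) => if S == set0 then r else 0); split.
  + split.
    * split; first exact: isH_hzero.
      move=> S; split; last by case: (S == set0); exact: inP_const.
      move=> E p /=; case: (eqVneq S set0) => ES //; by rewrite ES cards0 in E.
    * rewrite /dE /ezero /=; congr pair.
      - apply hf_ext=> S p; rewrite /Dt Dder_const dH_hzero /hzero; ring.
      - apply hf_ext=> T p; rewrite /dH /hzero; apply big_R0 => mu _.
        by rewrite Dtot_const Rmult_0_r.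
  + rewrite /= eqxx; ring.
- move=> x [[Hx1 Hx2] Hd] /= Hf.
  exists (@ezero n); split; first by split; exact: isH_hzero.
  case: x Hx1 Hx2 Hd Hf => a b /= Hx1 Hx2 Hd Hf; rewrite /dE /ezero /=; congr pair.
  + apply hf_ext=> S p; rewrite Dt_zero // dH_hzero /hzero (isH_out Hx1) //; [ring|lia].
  + rewrite dH_hzero; apply hf_ext=> S p; rewrite /hzero.
    case: (eqVneq S set0) => [->|ES].
    * have Hb : ZH 0 b by split=> //; exact: (dE_snd Hd).
      have Hdep := (H0 Hx2).1 Hb.
      rewrite (const_lemma (Ec := Ec) (E0 := E0) ((Hx2 set0).2) Hdep) // => q.
      have := dE_fst (x := (a, b)) set0 q Hd; rewrite dH_set0 /=; lra.
    * rewrite (Hx2 S).1 // => E; apply/negP: ES; rewrite negbK -cards_eq0; apply/eqP; lia.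
Qed.

Lemma part_c : quot_iso (@eadd n) (@escale n) (@hadd n) (@hscale n)
    (ZE Ec E0 (Z.of_nat n.+2 - 1)) (BE Ec E0 (Z.of_nat n.+2 - 1))
    (fun om => ZH (Z.of_nat n.+2 - 1) om /\ BH (Z.of_nat n.+2 - 1) (hDt Ec E0 om))
    (BH (Z.of_nat n.+2 - 1)).
Proof.
exists (fun x : eform => x.2); split; last split; last split; last split; last split.
- by [].
- by [].
- move=> x [[Hx1 Hx2] Hd]; split; first by split=> //; exact: dE_snd Hd.
  exists x.1; split=> //; apply hf_ext=> S p; have := dE_fst S p Hd; rewrite /hDt; lra.
- move=> x [y [[Hy1 Hy2] <-]] /=; by exists y.2.
- move=> om [[HomH Homd] [eta [He Hde]]]; exists (eta, om); split.
  + split; first by split.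
    rewrite /dE /ezero /=; congr pair=> //.
    apply hf_ext=> S p; rewrite Hde /hDt /hzero; ring.
  + exists (@hzero n); split; first exact: isH_hzero.
    rewrite dH_hzero; apply hf_ext=> S p; rewrite /hadd /hscale /hzero /=; ring.
- move=> x Hx HBx; apply exact_full => //; lia.
Qed.

Lemma part_d : quot_iso (@eadd n) (@escale n) (@hadd n) (@hscale n)
    (ZE Ec E0 (Z.of_nat n.+2 + 1)) (BE Ec E0 (Z.of_nat n.+2 + 1))
    (ZH (Z.of_nat n.+2))
    (fun om => exists eta zeta, isH (Z.of_nat n.+2 - 1) eta /\ ZH (Z.of_nat n.+2) zeta /\
                 om = hadd (dH eta) (hDt Ec E0 zeta)).
Proof.
have E1 : (Z.of_nat n.+2 + 1 - 1 = Z.of_nat n.+2)%Z by lia.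
have E2 : (Z.of_nat n.+2 + 1 - 1 - 1 = Z.of_nat n.+2 - 1)%Z by lia.
have ZHm : forall om : hform, isH (Z.of_nat n.+2) om -> ZH (Z.of_nat n.+2) om.
  move=> om H; split=> //; apply hf_ext=> T p; rewrite /hzero.
  apply: (isH_out (isH_dH H)); lia.
exists (fun x : eform => x.1); split; last split; last split; last split; last split.
- by [].
- by [].
- move=> x [[Hx1 Hx2] Hd]; apply ZHm; by rewrite -E1.
- move=> x [y [[Hy1 Hy2] <-]] /=.
  rewrite E2 in Hy1; rewrite E1 in Hy2.
  exists (hscale (-1) y.1), y.2; split; first exact: isH_hscale.
  split; first exact: ZHm.
  rewrite dH_hscale; apply hf_ext=> S p; rewrite /hadd /hscale /hDt; ring.
- move=> om Hom; exists (om, @hzero n); split.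
  + split; first by split; [rewrite E1; exact: Hom.1|exact: isH_hzero].
    rewrite /dE /ezero /=; congr pair; last exact: dH_hzero.
    apply hf_ext=> S p; rewrite Hom.2 Dt_zero // /hzero; ring.
  + exists (@hzero n), (@hzero n); split; first exact: isH_hzero.
    split; first by split; [exact: isH_hzero|exact: dH_hzero].
    rewrite dH_hzero hDt_hzero; apply hf_ext=> S p; rewrite /hadd /hscale /hzero /=; ring.
- move=> x [[Hx1 Hx2] Hd] [eta [zeta [He [[Hz Hzd] Hx]]]].
  exists (hscale (-1) eta, zeta); split.
  + split; [rewrite E2; exact: isH_hscale|by rewrite E1].
  + case: x Hx1 Hx2 Hd Hx => a b /= Hx1 Hx2 Hd Hx; rewrite /dE /=; congr pair.
    * rewrite Hx dH_hscale; apply hf_ext=> S p; rewrite /hadd /hscale /hDt; ring.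
    * rewrite Hzd; apply hf_ext=> S p; rewrite /hzero (isH_out Hx2) //; lia.
Qed.

Lemma part_e : quot_iso (@eadd n) (@escale n) (@hadd n) (@hscale n)
    (ZE Ec E0 (Z.of_nat n.+2))
    (fun x => exists y c, BE Ec E0 (Z.of_nat n.+2) y /\ ZH (Z.of_nat n.+2 - 1) c /\
                 x = eadd y (hscale ((-1) ^ n.+1)%R c, @hzero n))
    (fun om => ZH (Z.of_nat n.+2) om /\ BH (Z.of_nat n.+2) (hDt Ec E0 om)) (BH (Z.of_nat n.+2)).
Proof.
exists (fun x : eform => x.2); split; last split; last split; last split; last split.
- by [].
- by [].
- move=> x [[Hx1 Hx2] Hd]; split; first by split=> //; exact: dE_snd Hd.
  exists x.1; split=> //; apply hf_ext=> S p; have := dE_fst S p Hd; rewrite /hDt; lra.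
- move=> x [y [c [[z [[Hz1 Hz2] <-]] [Hc ->]]]] /=.
  exists z.2; split=> //; apply hf_ext=> S p; rewrite /hadd /hzero; ring.
- move=> om [[HomH Homd] [eta [He Hde]]]; exists (eta, om); split.
  + split; first by split.
    rewrite /dE /ezero /=; congr pair=> //.
    apply hf_ext=> S p; rewrite Hde /hDt /hzero; ring.
  + exists (@hzero n); split; first exact: isH_hzero.
    rewrite dH_hzero; apply hf_ext=> S p; rewrite /hadd /hscale /hzero /=; ring.
- move=> [a b] Hx [eta [He Heq]].
  have Hc := c_closed Hx He Heq.
  exists (dE Ec E0 (@hzero n, eta)), (hscale (- (-1) ^ n.+1) (hadd (hDt Ec E0 eta) (hscale (-1) a))); split.
  + exists (@hzero n, eta); split=> //; split=> //; exact: isH_hzero.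
  + split.
    * split; first exact: isH_hscale Hc.1.
      by rewrite dH_hscale Hc.2; apply hf_ext=> S p; rewrite /hscale /hzero; ring.
    * rewrite /eadd /dE /=; congr pair.
      - apply hf_ext=> S p; rewrite /hadd /hscale /hDt dH_hzero /hzero /=.
        have H := pow_m1_sq n; move: H; set s := (-1) ^ n => H.
        have E : forall D A, D - 0 + -1 * s * (- (-1 * s) * (D + -1 * A)) = D - (s * s) * (D - A).
          move=> D A; ring.
        rewrite E H; ring.
      - rewrite Heq; apply hf_ext=> S p; rewrite /hadd /hzero /=; ring.
Qed.
End P11.

Local Close Scope R_scope.
Theorem mainTheorem7 (n : nat) (Ec : 'I_n.+2 -> fn n) (E0 : fn n) :
  E_admissible Ec E0 ->
  (* standing fact: H^q_H = 0 for 1 <= q <= m-2 *)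
  (forall q : Z, (1 <= q <= Z.of_nat n.+2 - 2)%Z ->
     forall om : hform n, ZH q om -> BH q om) ->
  (* standing fact: H^0_H = smooth functions of t alone *)
  (forall om : hform n, isH 0%Z om ->
     (ZH 0%Z om <-> dep_on (Vt n :: nil) (om set0))) ->
  let m := Z.of_nat n.+2 in
  (* H^q_E = 0 for q < 0, 1 <= q <= m-2, q > m+1 *)
  (forall q : Z, ((q < 0)%Z \/ (1 <= q <= m - 2)%Z \/ (m + 1 < q)%Z) ->
     forall x, ZE Ec E0 q x -> BE Ec E0 q x) /\
  (* H^0_E = R *)
  quot_iso (@eadd n) (@escale n) Rplus Rmult
    (ZE Ec E0 0%Z) (BE Ec E0 0%Z) (fun _ : R => True) (fun r : R => r = 0%R) /\
  (* H^{m-1}_E = ker D_t^{m-1} *)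
  quot_iso (@eadd n) (@escale n) (@hadd n) (@hscale n)
    (ZE Ec E0 (m - 1)) (BE Ec E0 (m - 1))
    (fun om => ZH (m - 1) om /\ BH (m - 1) (hDt Ec E0 om)) (BH (m - 1)) /\
  (* H^{m+1}_E = H^m_H / im D_t^m *)
  quot_iso (@eadd n) (@escale n) (@hadd n) (@hscale n)
    (ZE Ec E0 (m + 1)) (BE Ec E0 (m + 1))
    (ZH m)
    (fun om => exists eta zeta, isH (m - 1) eta /\ ZH m zeta /\
                 om = hadd (dH eta) (hDt Ec E0 zeta)) /\
  (* H^m_E / im(H^{m-1}_H) = ker D_t^m, the map being om |-> (-1)^{m-1} dt /\ om *)
  quot_iso (@eadd n) (@escale n) (@hadd n) (@hscale n)
    (ZE Ec E0 m)
    (fun x => exists y c, BE Ec E0 m y /\ ZH (m - 1) c /\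
                 x = eadd y (hscale ((-1) ^ n.+1)%R c, @hzero n))
    (fun om => ZH m om /\ BH m (hDt Ec E0 om)) (BH m).
Proof.
move=> HE HB H0 m.
split; first by apply: part_a.
split; first by apply: part_b.
split; first by apply: part_c.
split; first by apply: part_d.
by apply: part_e.
Qed.
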